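(* Consider the first-order system described in the context with arbitrary initial data $(Q^0,\mathcal N)=(q_1^0,\dots,q_N^0,\nu_1,\dots,\nu_N)\in\mathbb R^{2N}$. Then: (1) The system has a unique global classical solution (each $q_i\in C^1(\mathbb R_+;\mathbb R)$); in particular $C_i(t)$, $S_i(t)$ and $\mathcal T$ are well defined for each $i\in[N]$ and $t\in\mathbb R_+$. (2) For each $i\in[N]$, $|C_i(t)|=0$ for all but finitely many $t\in\mathbb R_+$. (3) For each $i\in[N]$ and $0\le s\le t<\infty$, $S_i(s)\subset S_i(t)$; in particular $|S_i|$ is a right-continuous nondecreasing step function. (4) $\mathcal T$ is a finite set.
   Context: Let $N\ge1$, $\kappa>0$, $\alpha\in(0,1)$, $[N]=\{1,\dots,N\}$, $\mathbb R_+=(0,\infty)$. The function $G:\mathbb R\to\mathbb R$ is $G(p)=g(|p|)\,p/|p|$ for $p\ne0$, $G(0)=0$, with $g\in C^1([0,\infty))$, $g(0)=0$, $0<m\le g'\le M$ on every compact interval (constants depending on the interval), and $g$ convex or concave on $(0,\infty)$. Let $\Psi(r)=\int_0^r|x|^{-\alpha}dx=\mathrm{sgn}(r)\frac{|r|^{1-\alpha}}{1-\alpha}$. The first-order system is \[ \dot q_i=G\Big(\nu_i+\frac{\kappa}{N}\sum_{k=1}^N\Psi(q_k-q_i)\Big),\quad q_i(0)=q_i^0,\quad i\in[N]. \] For a classical solution $Q$: $q_i,q_j$ collide at time $t$ if $q_i(t)=q_j(t)$ but $\dot q_i(t)\ne\dot q_j(t)$; they stick at time $t$ if $q_i(t)=q_j(t)$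 and $\dot q_i(t)=\dot q_j(t)$. Define $C_i(t)=\{j\in[N]: q_i,q_j \text{ collide at } t\}$, $S_i(t)=\{j\in[N]: q_i,q_j\text{ stick at }t\}$, and \[ \mathcal T=\bigcup_{i\in[N]}\big(\{t\in\mathbb R_+:|C_i(t)|\ne0\}\cup\{t\in\mathbb R_+:|S_i|\text{ is discontinuous at }t\}\big). \] *)

(* Defs.v *)
From Stdlib Require Import Reals Lra List ClassicalEpsilon.
From Coquelicot Require Import Coquelicot.
Open Scope R_scope.

(* finite sum over k in [0, N) ; indices 0..N-1 stand for [N] = {1..N} *)
Definition sumN (N : nat) (f : nat -> R) : R :=
  fold_right Rplus 0 (map f (seq 0 N)).

Definition Gfun (g : R -> R) (p : R) : R :=
  if Req_EM_T p 0 then 0 else g (Rabs p) * p / Rabs p.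

Definition Psi (alpha r : R) : R :=
  if Req_EM_T r 0 then 0
  else if Rlt_dec 0 r then Rpower r (1 - alpha) / (1 - alpha)
  else - (Rpower (- r) (1 - alpha) / (1 - alpha)).

(* Right-hand side of the i-th equation evaluated along Q at time t;
   for a classical solution this is \dot q_i(t) (right derivative at t=0). *)
Definition vel (N : nat) (kappa alpha : R) (g : R -> R) (nu : nat -> R)
  (q : nat -> R -> R) (i : nat) (t : R) : R :=
  Gfun g (nu i + kappa / INR N * sumN N (fun k => Psi alpha (q k t - q i t))).

Definition C1_nonneg (g dg : R -> R) : Prop :=
  (forall x, 0 <= x ->
     filterlim g (within (fun y => 0 <= y) (locally x)) (locally (g x))) /\
  (forall x, 0 < x -> is_derive g x (dg x)) /\
  (forall x, 0 <= x ->
     filterlim dg (within (fun y => 0 <= y) (locally x)) (locally (dg x))).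

Definition convex_pos (f : R -> R) : Prop :=
  forall x y l, 0 < x -> 0 < y -> 0 <= l <= 1 ->
    f (l * x + (1 - l) * y) <= l * f x + (1 - l) * f y.

Definition concave_pos (f : R -> R) : Prop :=
  forall x y l, 0 < x -> 0 < y -> 0 <= l <= 1 ->
    l * f x + (1 - l) * f y <= f (l * x + (1 - l) * y).

Definition admissible_g (g : R -> R) : Prop :=
  exists dg : R -> R,
    C1_nonneg g dg /\ g 0 = 0 /\
    (forall b, 0 <= b -> exists m M, 0 < m /\
        forall x, 0 <= x <= b -> m <= dg x <= M) /\
    (convex_pos g \/ concave_pos g).

Definition is_solution (N : nat) (kappa alpha : R) (g : R -> R)
  (q0 nu : nat -> R) (q : nat -> R -> R) : Prop :=
  forall i, (i < N)%nat ->
    q i 0 = q0 i /\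
    filterlim (q i) (at_right 0) (locally (q i 0)) /\
    (forall t, 0 < t -> is_derive (q i) t (vel N kappa alpha g nu q i t)) /\
    (forall t, 0 < t -> continuous (vel N kappa alpha g nu q i) t).

Definition collide N kappa alpha g nu q (i j : nat) (t : R) : Prop :=
  q i t = q j t /\ vel N kappa alpha g nu q i t <> vel N kappa alpha g nu q j t.

Definition stick N kappa alpha g nu q (i j : nat) (t : R) : Prop :=
  q i t = q j t /\ vel N kappa alpha g nu q i t = vel N kappa alpha g nu q j t.

Definition cardP (N : nat) (P : nat -> Prop) : nat :=
  length (filter (fun j => if excluded_middle_informative (P j) then true else false)
                 (seq 0 N)).

Definition cardC N kappa alpha g nu q i t : nat :=
  cardP N (fun j => collide N kappa alpha g nu q i j t).
Definition cardS N kappa alpha g nu q i t : nat :=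
  cardP N (fun j => stick N kappa alpha g nu q i j t).

Definition in_T N kappa alpha g nu q (t : R) : Prop :=
  0 < t /\ exists i, (i < N)%nat /\
    (cardC N kappa alpha g nu q i t <> 0%nat \/
     ~ continuous (fun s => INR (cardS N kappa alpha g nu q i s)) t).

Definition finite_set (P : R -> Prop) : Prop :=
  exists l : list R, forall t, P t -> In t l.

(* Main.v *)
Require Import Defs.
From Stdlib Require Import Reals Lra Lia List ClassicalEpsilon Classical ZArith.
From Coquelicot Require Import Coquelicot.
Open Scope R_scope.

Lemma fold_Rplus_init (l : list R) (a : R) :
  fold_right Rplus a l = fold_right Rplus 0 l + a.
Proof. induction l as [|x l IH]; simpl; [lra| rewrite IH; lra]. Qed.

Lemma sumN_0 f : sumN 0 f = 0.
Proof. reflexivity. Qed.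

Lemma sumN_S n f : sumN (S n) f = sumN n f + f n.
Proof.
  unfold sumN. rewrite seq_S, map_app, fold_right_app. simpl.
  rewrite fold_Rplus_init. f_equal. lra.
Qed.

Lemma sumN_le n f h : (forall k, (k < n)%nat -> f k <= h k) -> sumN n f <= sumN n h.
Proof.
  induction n; intros H. rewrite !sumN_0; lra.
  rewrite !sumN_S. assert (f n <= h n) by (apply H; lia).
  assert (sumN n f <= sumN n h) by (apply IHn; intros; apply H; lia). lra.
Qed.

Lemma sumN_ext n f h : (forall k, (k < n)%nat -> f k = h k) -> sumN n f = sumN n h.
Proof.
  intros H; apply Rle_antisym; apply sumN_le; intros k Hk; rewrite H; lra || lia.
Qed.

Lemma sumN_abs n f : Rabs (sumN n f) <= sumN n (fun k => Rabs (f k)).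
Proof.
  induction n. rewrite !sumN_0, Rabs_R0; lra.
  rewrite !sumN_S. eapply Rle_trans; [apply Rabs_triang|]. lra.
Qed.

Lemma sumN_bound n f B : (forall k, (k < n)%nat -> Rabs (f k) <= B) ->
  Rabs (sumN n f) <= INR n * B.
Proof.
  intros H. eapply Rle_trans; [apply sumN_abs|].
  induction n. rewrite sumN_0; simpl; lra.
  rewrite sumN_S, S_INR. assert (Rabs (f n) <= B) by (apply H; lia).
  assert (sumN n (fun k => Rabs (f k)) <= INR n * B) by (apply IHn; intros; apply H; lia).
  lra.
Qed.

Lemma sumN_nonneg n f : (forall k, (k < n)%nat -> 0 <= f k) -> 0 <= sumN n f.
Proof.
  induction n; intros H. rewrite sumN_0; lra.
  rewrite sumN_S. assert (0 <= f n) by (apply H; lia).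
  assert (0 <= sumN n f) by (apply IHn; intros; apply H; lia). lra.
Qed.

Lemma sumN_term_ge n f j : (forall k, (k < n)%nat -> 0 <= f k) -> (j < n)%nat ->
  f j <= sumN n f.
Proof.
  induction n; intros H Hj. lia.
  rewrite sumN_S. destruct (Nat.eq_dec j n).
  - subst. assert (0 <= sumN n f) by (apply sumN_nonneg; intros; apply H; lia). lra.
  - assert (f j <= sumN n f) by (apply IHn; [intros; apply H; lia | lia]).
    assert (0 <= f n) by (apply H; lia). lra.
Qed.

Lemma sumN_term_le n f j : (forall k, (k < n)%nat -> f k <= 0) -> (j < n)%nat ->
  sumN n f <= f j.
Proof.
  intros H Hj.
  assert (E: forall m h, sumN m (fun k => - h k) = - sumN m h).
  { induction m; intros h. rewrite !sumN_0; lra. rewrite !sumN_S, IHm; lra. }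
  assert (- f j <= sumN n (fun k => - f k)).
  { apply (sumN_term_ge n (fun k => - f k) j); [intros k Hk; specialize (H k Hk); lra| lia]. }
  rewrite E in H0. lra.
Qed.

Lemma abs_le_sumN n f i : (i < n)%nat -> Rabs (f i) <= sumN n (fun k => Rabs (f k)).
Proof.
  intros Hi. apply (sumN_term_ge n (fun k => Rabs (f k))); auto.
  intros; apply Rabs_pos.
Qed.

Lemma argmax_ex n (f : nat -> R) : (1 <= n)%nat ->
  exists i, (i < n)%nat /\ forall k, (k < n)%nat -> f k <= f i.
Proof.
  induction n; intros Hn. lia.
  destruct n.
  - exists 0%nat. split; [lia|]. intros k Hk. assert (k = 0%nat) by lia. subst; lra.
  - destruct IHn as [i [Hi Hm]]; [lia|].
    destruct (Rle_dec (f (S n)) (f i)).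
    + exists i. split; [lia|]. intros k Hk. destruct (Nat.eq_dec k (S n)); [subst; lra|].
      apply Hm; lia.
    + exists (S n). split; [lia|]. intros k Hk. destruct (Nat.eq_dec k (S n)); [subst; lra|].
      specialize (Hm k ltac:(lia)). lra.
Qed.

Lemma argmin_ex n (f : nat -> R) : (1 <= n)%nat ->
  exists i, (i < n)%nat /\ forall k, (k < n)%nat -> f i <= f k.
Proof.
  intros Hn. destruct (argmax_ex n (fun k => - f k) Hn) as [i [Hi Hm]].
  exists i; split; auto. intros k Hk; specialize (Hm k Hk); lra.
Qed.

Lemma fin_eta n (P : nat -> R -> Prop) :
  (forall i e e', 0 < e' <= e -> P i e -> P i e') ->
  (forall i, (i < n)%nat -> exists e, 0 < e /\ P i e) ->
  exists e, 0 < e /\ forall i, (i < n)%nat -> P i e.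
Proof.
  intros Hmono. induction n; intros H.
  - exists 1; split; [lra| intros; lia].
  - destruct IHn as [e1 [He1 H1]]; [intros; apply H; lia|].
    destruct (H n ltac:(lia)) as [e2 [He2 H2]].
    exists (Rmin e1 e2). split; [apply Rmin_pos; auto|].
    intros i Hi. destruct (Nat.eq_dec i n).
    + subst. apply (Hmono n e2); auto. split; [apply Rmin_pos; auto| apply Rmin_r].
    + apply (Hmono i e1); [split; [apply Rmin_pos; auto| apply Rmin_l]|]. apply H1; lia.
Qed.

Lemma real_ind (P : R -> Prop) t0 :
  P t0 ->
  (forall t, t0 <= t -> (forall s, t0 <= s <= t -> P s) ->
     exists e, 0 < e /\ forall s, t <= s < t + e -> P s) ->
  (forall t, t0 < t -> (forall s, t0 <= s < t -> P s) -> P t) ->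
  forall t, t0 <= t -> P t.
Proof.
  intros H0 Hfw Hlim t1 Ht1.
  apply NNPP; intros Hn.
  set (A := fun u => t0 <= u /\ forall s, t0 <= s <= u -> P s).
  assert (HbA : bound A).
  { exists t1. intros u [Hu Hs]. destruct (Rle_dec u t1); auto.
    exfalso; apply Hn, Hs; lra. }
  assert (HeA : exists x, A x).
  { exists t0. split; [lra|]. intros s Hs. replace s with t0 by lra; auto. }
  destruct (completeness A HbA HeA) as [L [HLub HLlub]].
  assert (Ht0L : t0 <= L) by (apply HLub; destruct HeA; unfold A; split; [lra|];
    intros s Hs; replace s with t0 by lra; auto).
  assert (Hbelow : forall s, t0 <= s < L -> P s).
  { intros s Hs. apply NNPP; intro Hps.
    assert (L <= s). { apply HLlub. intros u [Hu Hu2]. destruct (Rle_dec u s); auto.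
      exfalso; apply Hps, Hu2; lra. }
    lra. }
  assert (HPL : P L).
  { destruct (Rle_lt_or_eq_dec t0 L Ht0L) as [Hlt|Heq].
    - apply Hlim; auto.
    - subst; auto. }
  assert (Hall : forall s, t0 <= s <= L -> P s).
  { intros s Hs. destruct (Rle_lt_or_eq_dec s L (proj2 Hs)); [apply Hbelow; lra| subst; auto]. }
  destruct (Hfw L Ht0L Hall) as [e [He Hfe]].
  assert (A (L + e/2)).
  { split; [lra|]. intros s Hs. destruct (Rle_dec s L); [apply Hall; lra| apply Hfe; lra]. }
  specialize (HLub _ H). lra.
Qed.

Lemma chain (P : R -> Prop) e :
  0 < e -> P 0 -> (forall s t, 0 <= s <= t -> t <= s + e -> P s -> P t) ->
  forall t, 0 <= t -> P t.
Proof.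
  intros He H0 Hs.
  assert (Hm : forall m, forall t, 0 <= t <= INR m * e -> P t).
  { induction m; intros t Ht.
    - simpl in Ht. replace t with 0 by lra; auto.
    - rewrite S_INR in Ht. destruct (Rle_dec t (INR m * e)).
      + apply IHm; lra.
      + apply (Hs (INR m * e)); [split; [apply Rmult_le_pos; [apply pos_INR|lra]|lra]|lra|].
        apply IHm. split; [apply Rmult_le_pos; [apply pos_INR|lra]|lra]. }
  intros t Ht. destruct (archimed (t / e)) as [H1 H2].
  assert (0 <= IZR (up (t/e))).
  { assert (0 <= t / e) by (apply Rdiv_le_0_compat; lra). lra. }
  apply (Hm (Z.to_nat (up (t / e)))). split; auto.
  rewrite INR_IZR_INZ, Z2Nat.id.
  2:{ apply le_IZR; lra. }
  apply Rmult_le_reg_r with (/ e); [apply Rinv_0_lt_compat; lra|].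
  rewrite Rmult_assoc, Rinv_r; [|lra]. unfold Rdiv in H1. lra.
Qed.

Lemma deriv_nonneg_at_touch (h : R -> R) t t0 l :
  t0 < t -> (forall s, t0 < s < t -> h s < 0) -> h t = 0 -> is_derive h t l -> 0 <= l.
Proof.
  intros Ht Hneg H0 Hd. apply is_derive_Reals in Hd.
  destruct (Rle_dec 0 l) as [|Hl]; auto. exfalso.
  destruct (Hd (- l / 2) ltac:(lra)) as [d Hdd].
  destruct d as [d Hdp]; simpl in Hdd.
  set (u := - Rmin (d/2) ((t - t0)/2)).
  assert (Hmp : 0 < Rmin (d/2) ((t-t0)/2)) by (apply Rmin_pos; lra).
  assert (Hu1 : u < 0) by (unfold u; lra).
  assert (Hu2 : Rabs u < d).
  { unfold u. rewrite Rabs_Ropp, Rabs_pos_eq by lra.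
    assert (Rmin (d/2) ((t-t0)/2) <= d/2) by apply Rmin_l. lra. }
  specialize (Hdd u ltac:(lra) Hu2).
  assert (Hs : h (t + u) < 0).
  { apply Hneg. assert (Rmin (d/2) ((t-t0)/2) <= (t-t0)/2) by apply Rmin_r. unfold u; lra. }
  rewrite H0, Rminus_0_r in Hdd.
  assert (0 < (- h (t+u)) / (- u)) by (apply Rdiv_lt_0_compat; lra).
  replace ((- h (t+u)) / (- u)) with (h (t+u) / u) in H by (field; lra).
  apply Rabs_lt_between in Hdd. lra.
Qed.

Definition bP (P : nat -> Prop) (j : nat) : bool :=
  if excluded_middle_informative (P j) then true else false.

Lemma cardP_eq n P : cardP n P = length (filter (bP P) (seq 0 n)).
Proof. reflexivity. Qed.

Lemma filter_len_mono (l : list nat) (p p' : nat -> bool) :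
  (forall j, In j l -> p j = true -> p' j = true) ->
  (length (filter p l) <= length (filter p' l))%nat.
Proof.
  induction l as [|x l IH]; intros H; simpl; auto.
  assert (IH' : (length (filter p l) <= length (filter p' l))%nat)
    by (apply IH; intros j Hj; apply H; simpl; auto).
  destruct (p x) eqn:E1.
  - rewrite (H x (or_introl eq_refl) E1). simpl. lia.
  - destruct (p' x); simpl; lia.
Qed.

Lemma cardP_mono n P P' : (forall j, (j < n)%nat -> P j -> P' j) -> (cardP n P <= cardP n P')%nat.
Proof.
  intros H. rewrite !cardP_eq. apply filter_len_mono.
  intros j Hj. apply in_seq in Hj. unfold bP.
  destruct (excluded_middle_informative (P j)) as [Hp|Hp];
  destruct (excluded_middle_informative (P' j)) as [Hp'|Hp']; auto.
  intros _. exfalso; apply Hp', H; auto; lia.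
Qed.

Lemma cardP_ext n P P' : (forall j, (j < n)%nat -> (P j <-> P' j)) -> cardP n P = cardP n P'.
Proof.
  intros H. apply Nat.le_antisymm; apply cardP_mono; intros j Hj; apply H; auto.
Qed.

Lemma cardP_nonzero n P : cardP n P <> 0%nat -> exists j, (j < n)%nat /\ P j.
Proof.
  intros H. rewrite cardP_eq in H.
  destruct (filter (bP P) (seq 0 n)) as [|j l] eqn:E. simpl in H; lia.
  assert (Hin : In j (filter (bP P) (seq 0 n))) by (rewrite E; simpl; auto).
  apply filter_In in Hin. destruct Hin as [H1 H2]. apply in_seq in H1.
  exists j. split; [lia|]. unfold bP in H2. destruct (excluded_middle_informative (P j)); auto; discriminate.
Qed.

Lemma finite_sub (P P' : R -> Prop) : (forall t, P t -> P' t) -> finite_set P' -> finite_set P.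
Proof. intros H [l Hl]. exists l. intros t Ht. apply Hl, H, Ht. Qed.

Lemma finite_union n (P : nat -> R -> Prop) :
  (forall i, (i < n)%nat -> finite_set (P i)) -> finite_set (fun t => exists i, (i < n)%nat /\ P i t).
Proof.
  induction n; intros H.
  - exists nil. intros t [i [Hi _]]. lia.
  - destruct IHn as [l1 Hl1]; [intros; apply H; lia|].
    destruct (H n ltac:(lia)) as [l2 Hl2].
    exists (l1 ++ l2). intros t [i [Hi Hp]]. apply in_or_app.
    destruct (Nat.eq_dec i n). subst; right; apply Hl2; auto.
    left. apply Hl1. exists i. split; auto; lia.
Qed.

Lemma finite_atmost1 (P : R -> Prop) : (forall t1 t2, P t1 -> P t2 -> t1 = t2) -> finite_set P.
Proof.
  intros H. destruct (classic (exists t, P t)) as [[t0 Ht0]|Hn].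
  - exists (t0 :: nil). intros t Ht. left. apply H; auto.
  - exists nil. intros t Ht. apply Hn. exists t; auto.
Qed.

Lemma finite_or (P P' : R -> Prop) : finite_set P -> finite_set P' -> finite_set (fun t => P t \/ P' t).
Proof.
  intros [l1 H1] [l2 H2]. exists (l1 ++ l2). intros t [Ht|Ht]; apply in_or_app; auto.
Qed.

Lemma cont_eps f t : continuous f t ->
  forall e, 0 < e -> exists d, 0 < d /\ forall s, Rabs (s - t) < d -> Rabs (f s - f t) < e.
Proof.
  intros Hc e He. apply continuity_pt_filterlim in Hc.
  destruct (Hc e He) as [d [Hd Hdd]].
  exists d; split; auto. intros s Hs.
  destruct (Req_dec s t). subst; rewrite Rminus_diag, Rabs_R0; auto.
  apply Hdd. split; [split; [exact I| congruence]|]. exact Hs.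
Qed.

Lemma eps_cont f t :
  (forall e, 0 < e -> exists d, 0 < d /\ forall s, Rabs (s - t) < d -> Rabs (f s - f t) < e) ->
  continuous f t.
Proof.
  intros H. apply continuity_pt_filterlim. intros e He.
  destruct (H e He) as [d [Hd Hdd]]. exists d; split; auto.
  intros s [_ Hs]. apply Hdd, Hs.
Qed.

Lemma deriv_cont_eps f t l : is_derive f t l ->
  forall e, 0 < e -> exists d, 0 < d /\ forall s, Rabs (s - t) < d -> Rabs (f s - f t) < e.
Proof.
  intros Hd. apply cont_eps. apply continuity_pt_filterlim.
  apply derivable_continuous_pt. apply is_derive_Reals in Hd. exists l; exact Hd.
Qed.

Lemma at_right_eps f t0 : filterlim f (at_right t0) (locally (f t0)) ->
  forall e, 0 < e -> exists d, 0 < d /\ forall s, t0 <= s < t0 + d -> Rabs (f s - f t0) < e.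
Proof.
  intros H e He. apply filterlim_locally with (eps := mkposreal e He) in H.
  destruct H as [d Hd]. exists d. split; [apply cond_pos|].
  intros s Hs. destruct (Req_dec s t0). subst; rewrite Rminus_diag, Rabs_R0; auto.
  apply Hd; [|lra].
  unfold ball; simpl; unfold AbsRing_ball, abs, minus, plus, opp; simpl.
  rewrite Rabs_pos_eq; lra.
Qed.

Lemma first_cross (K : nat) (h dh : nat -> R -> R) t0 :
 (forall a, (a<K)%nat -> h a t0 < 0) ->
 (forall a, (a<K)%nat -> forall e, 0<e -> exists d, 0<d /\
      forall s, t0 <= s < t0 + d -> Rabs (h a s - h a t0) < e) ->
 (forall a, (a<K)%nat -> forall t, t0 < t -> is_derive (h a) t (dh a t)) ->
 (forall t a, t0 < t -> (a<K)%nat -> h a t = 0 ->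
      (forall b, (b<K)%nat -> h b t <= 0) -> dh a t < 0) ->
 forall t, t0 <= t -> forall a, (a<K)%nat -> h a t < 0.
Proof.
  intros H0 Hr Hd Hkey.
  apply (real_ind (fun t => forall a, (a<K)%nat -> h a t < 0) t0); auto.
  - intros t Ht Hall.
    assert (Hex : forall a, (a < K)%nat -> exists e, 0 < e /\ forall s, t <= s < t + e -> h a s < 0).
    { intros a Ha. specialize (Hall t ltac:(lra) a Ha).
      destruct (Rle_lt_or_eq_dec t0 t Ht) as [Hlt|Heq].
      * destruct (deriv_cont_eps _ _ _ (Hd a Ha t Hlt) (- h a t) ltac:(lra)) as [d [Hdp Hdd]].
        exists d; split; auto. intros s Hs.
        specialize (Hdd s ltac:(apply Rabs_lt_between; lra)).
        apply Rabs_lt_between in Hdd; lra.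
      * subst t. destruct (Hr a Ha (- h a t0) ltac:(lra)) as [d [Hdp Hdd]].
        exists d; split; auto. intros s Hs. specialize (Hdd s Hs).
        apply Rabs_lt_between in Hdd; lra. }
    assert (Hmono : forall a e e', 0 < e' <= e -> (forall s, t <= s < t + e -> h a s < 0) ->
       (forall s, t <= s < t + e' -> h a s < 0)).
    { intros a e e' He' Hq s Hs. apply Hq; lra. }
    destruct (fin_eta K (fun a e => forall s, t <= s < t + e -> h a s < 0) Hmono Hex) as [e [He Hp]].
    exists e; split; [exact He|]. intros s Hs a Ha. apply (Hp a Ha s Hs).
  - intros t Ht Hbel.
    assert (Hle : forall b, (b<K)%nat -> h b t <= 0).
    { intros b Hb. apply Rnot_lt_le; intro Hpos.
      destruct (deriv_cont_eps _ _ _ (Hd b Hb t Ht) (h b t) Hpos) as [d [Hdp Hdd]].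
      set (s := t - Rmin (d/2) ((t-t0)/2)).
      assert (Hm : 0 < Rmin (d/2) ((t-t0)/2)) by (apply Rmin_pos; lra).
      assert (Hm1 : Rmin (d/2) ((t-t0)/2) <= d/2) by apply Rmin_l.
      assert (Hm2 : Rmin (d/2) ((t-t0)/2) <= (t-t0)/2) by apply Rmin_r.
      specialize (Hdd s ltac:(apply Rabs_lt_between; unfold s; lra)).
      specialize (Hbel s ltac:(unfold s; lra) b Hb).
      apply Rabs_lt_between in Hdd. lra. }
    intros a Ha. destruct (Rle_lt_or_eq_dec _ _ (Hle a Ha)) as [|Heq]; auto.
    exfalso. specialize (Hkey t a Ht Ha Heq Hle).
    assert (0 <= dh a t).
    { apply (deriv_nonneg_at_touch (h a) t t0); auto.
      intros s Hs; apply Hbel; [lra|auto]. }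
    lra.
Qed.

Lemma eps_at_right f t0 :
  (forall e, 0 < e -> exists d, 0 < d /\ forall s, t0 < s < t0 + d -> Rabs (f s - f t0) < e) ->
  filterlim f (at_right t0) (locally (f t0)).
Proof.
  intros H. apply filterlim_locally. intros [e He].
  destruct (H e He) as [d [Hd Hdd]].
  exists (mkposreal d Hd). intros y Hy Hy0. simpl.
  unfold ball in Hy; simpl in Hy; unfold AbsRing_ball, abs, minus, plus, opp in Hy; simpl in Hy.
  apply Rabs_lt_between in Hy.
  unfold ball; simpl; unfold AbsRing_ball, abs, minus, plus, opp; simpl.
  apply Hdd; lra.
Qed.

Lemma div_bound a hh l b : hh <> 0 -> Rabs (a - hh * l) <= b * Rabs hh -> Rabs (a / hh - l) <= b.
Proof.
  intros Hh H. replace (a / hh - l) with ((a - hh * l) / hh) by (field; auto).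
  unfold Rdiv. rewrite Rabs_mult, Rabs_inv.
  apply Rmult_le_reg_r with (Rabs hh); [apply Rabs_pos_lt; auto|].
  rewrite Rmult_assoc, Rinv_l by (apply Rabs_no_R0; auto). lra.
Qed.

Lemma deriv_lin (f g : R -> R) a b t e c : is_derive f t a -> is_derive g t b ->
  is_derive (fun u => f u - g u - e * (1 + u - c)) t (a - b - e).
Proof.
intros.
assert (H1 : is_derive (fun u => e * (1 + u - c)) t e).
{ auto_derive. auto. ring. }
apply (is_derive_minus (fun u => f u - g u) (fun u => e * (1 + u - c))); auto.
apply (is_derive_minus f g); auto.
Qed.

Lemma deriv_sub (f g : R -> R) a b t : is_derive f t a -> is_derive g t b ->
  is_derive (fun u => f u - g u) t (a - b).
Proof. intros. apply (is_derive_minus f g); auto. Qed.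

Section PsiSec.
Variable alpha : R.
Hypothesis Ha : 0 < alpha < 1.

Let b := 1 - alpha.
Lemma b_pos : 0 < 1 - alpha. Proof. lra. Qed.

Lemma Psi_pos r : 0 < r -> Psi alpha r = Rpower r (1 - alpha) / (1 - alpha).
Proof.
  intros Hr. unfold Psi. destruct (Req_EM_T r 0); [lra|].
  destruct (Rlt_dec 0 r); [auto|lra].
Qed.

Lemma Psi_neg r : r < 0 -> Psi alpha r = - (Rpower (- r) (1 - alpha) / (1 - alpha)).
Proof.
  intros Hr. unfold Psi. destruct (Req_EM_T r 0); [lra|].
  destruct (Rlt_dec 0 r); [lra|auto].
Qed.

Lemma Psi_zero : Psi alpha 0 = 0.
Proof. unfold Psi. destruct (Req_EM_T 0 0); [auto|lra]. Qed.

Lemma Rpower_pos' x y : 0 < Rpower x y.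
Proof. unfold Rpower. apply exp_pos. Qed.

Lemma Psi_pos_val r : 0 < r -> 0 < Psi alpha r.
Proof.
  intros Hr. rewrite Psi_pos by auto. apply Rdiv_lt_0_compat; [apply Rpower_pos'|lra].
Qed.

Lemma Psi_odd r : Psi alpha (- r) = - Psi alpha r.
Proof.
  destruct (Rtotal_order r 0) as [H|[H|H]].
  - rewrite Psi_pos by lra. rewrite Psi_neg by lra. lra.
  - subst. rewrite Ropp_0, Psi_zero. lra.
  - rewrite Psi_neg by lra. rewrite Psi_pos by lra. rewrite Ropp_involutive. auto.
Qed.

Lemma Psi_mono x y : x <= y -> Psi alpha x <= Psi alpha y.
Proof.
  intros Hxy.
  assert (Hb : 0 < 1 - alpha) by lra.
  destruct (Rtotal_order x 0) as [Hx|[Hx|Hx]];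
  destruct (Rtotal_order y 0) as [Hy|[Hy|Hy]]; try lra.
  - rewrite !Psi_neg by lra.
    assert (Rpower (- y) (1 - alpha) <= Rpower (- x) (1 - alpha)) by
      (apply Rle_Rpower_l; lra).
    apply Ropp_le_contravar. unfold Rdiv. apply Rmult_le_compat_r; [|auto].
    left; apply Rinv_0_lt_compat; lra.
  - subst. rewrite Psi_zero, Psi_neg by lra.
    assert (0 < Rpower (- x) (1 - alpha) / (1 - alpha)) by
      (apply Rdiv_lt_0_compat; [apply Rpower_pos'|lra]). lra.
  - rewrite Psi_neg by lra. rewrite (Psi_pos y) by lra.
    assert (0 < Rpower (- x) (1 - alpha) / (1 - alpha)) by
      (apply Rdiv_lt_0_compat; [apply Rpower_pos'|lra]).
    assert (0 < Rpower y (1 - alpha) / (1 - alpha)) by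
      (apply Rdiv_lt_0_compat; [apply Rpower_pos'|lra]). lra.
  - subst. lra.
  - subst. rewrite Psi_zero. left; apply Psi_pos_val; lra.
  - rewrite !Psi_pos by lra.
    assert (Rpower x (1 - alpha) <= Rpower y (1 - alpha)) by
      (apply Rle_Rpower_l; lra).
    unfold Rdiv. apply Rmult_le_compat_r; [|auto].
    left; apply Rinv_0_lt_compat; lra.
Qed.

Lemma Psi_abs_bound r R : Rabs r <= R -> Rabs (Psi alpha r) <= Psi alpha R.
Proof.
  intros H. destruct (Rle_dec 0 r).
  - rewrite Rabs_pos_eq in H by auto.
    assert (0 <= Psi alpha r) by (rewrite <- Psi_zero; apply Psi_mono; auto).
    rewrite Rabs_pos_eq by auto. apply Psi_mono; auto.
  - rewrite Rabs_left in H by lra.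
    assert (Psi alpha r <= 0) by (rewrite <- Psi_zero; apply Psi_mono; lra).
    rewrite Rabs_left1 by auto. rewrite <- Psi_odd. apply Psi_mono; auto.
Qed.

Lemma Psi_unbounded K : exists R, 0 < R /\ K <= Psi alpha R.
Proof.
  assert (Hb : 0 < 1 - alpha) by lra.
  set (R := Rpower ((1 - alpha) * (Rabs K + 1)) (/ (1 - alpha))).
  exists R. assert (HR : 0 < R) by apply Rpower_pos'. split; auto.
  rewrite Psi_pos by auto. unfold R. rewrite Rpower_mult.
  rewrite Rinv_l by lra. rewrite Rpower_1.
  - assert (K <= Rabs K) by apply RRle_abs.
    replace ((1 - alpha) * (Rabs K + 1) / (1 - alpha)) with (Rabs K + 1) by (field; lra). lra.
  - assert (0 <= Rabs K) by apply Rabs_pos. apply Rmult_lt_0_compat; lra.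
Qed.

Lemma Rpower_cont_pt x y : 0 < x -> continuity_pt (fun z => Rpower z y) x.
Proof.
  intros Hx. apply derivable_continuous_pt. exists (y * Rpower x (y - 1)).
  apply derivable_pt_lim_power; auto.
Qed.

Lemma Psi_cont r : continuity_pt (Psi alpha) r.
Proof.
  assert (Hb : 0 < 1 - alpha) by lra.
  destruct (Rtotal_order r 0) as [Hr|[Hr|Hr]].
  - apply continuity_pt_locally_ext with (f := fun z => - (Rpower (- z) (1 - alpha) / (1 - alpha)))
      (a := - r).
    + lra.
    + intros y Hy. unfold Rdist in Hy. apply Rabs_lt_between in Hy.
      rewrite Psi_neg; auto; lra.
    + apply continuity_pt_opp. apply continuity_pt_mult; [|apply continuity_pt_const; intros u v; auto].
      apply (continuity_pt_comp Ropp (fun z => Rpower z (1 - alpha))).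
      * apply continuity_pt_opp, derivable_continuous_pt, derivable_pt_id.
      * apply Rpower_cont_pt. lra.
  - subst. intros e He. simpl.
    set (d := Rpower (e * (1 - alpha)) (/ (1 - alpha))).
    exists d. split. apply Rpower_pos'.
    intros x [_ Hx]. unfold R_dist in *. rewrite Psi_zero, Rminus_0_r in *.
    try rewrite Rminus_0_r in Hx.
    assert (Hd : Rpower d (1 - alpha) = e * (1 - alpha)).
    { unfold d. rewrite Rpower_mult, Rinv_l by lra. apply Rpower_1.
      apply Rmult_lt_0_compat; lra. }
    destruct (Req_dec x 0). subst. rewrite Psi_zero, Rabs_R0; lra.
    apply Rle_lt_trans with (Psi alpha (Rabs x)).
    + apply Psi_abs_bound. lra.
    + assert (0 < Rabs x) by (apply Rabs_pos_lt; auto).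
      rewrite Psi_pos by auto.
      assert (Rpower (Rabs x) (1 - alpha) < Rpower d (1 - alpha)).
      { apply Rlt_Rpower_l; lra. }
      rewrite Hd in H1. apply Rmult_lt_reg_r with (1 - alpha); [lra|].
      unfold Rdiv. rewrite Rmult_assoc, Rinv_l by lra. lra.
  - apply continuity_pt_locally_ext with (f := fun z => Rpower z (1 - alpha) / (1 - alpha))
      (a := r).
    + lra.
    + intros y Hy. unfold Rdist in Hy. apply Rabs_lt_between in Hy.
      rewrite Psi_pos; auto; lra.
    + apply continuity_pt_mult; [|apply continuity_pt_const; intros u v; auto].
      apply Rpower_cont_pt. lra.
Qed.

End PsiSec.

Section GSec.
Variable g dg : R -> R.
Hypothesis Hc1 : C1_nonneg g dg.
Hypothesis Hg0 : g 0 = 0.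
Hypothesis Hdg : forall b, 0 <= b -> exists m M, 0 < m /\ forall x, 0 <= x <= b -> m <= dg x <= M.

Lemma g_cont_pos x : 0 < x -> continuity_pt g x.
Proof.
  intros Hx. destruct Hc1 as [_ [Hd _]]. apply derivable_continuous_pt.
  exists (dg x). apply is_derive_Reals. apply Hd; auto.
Qed.

Lemma g_strict_pos x y : 0 < x < y -> g x < g y.
Proof.
  intros [Hx Hxy]. destruct Hc1 as [_ [Hd _]].
  destruct (MVT_gen g x y dg) as [c [Hc Heq]].
  - intros z Hz. rewrite Rmin_left in Hz by lra. rewrite Rmax_right in Hz by lra.
    apply Hd; lra.
  - intros z Hz. rewrite Rmin_left in Hz by lra. rewrite Rmax_right in Hz by lra.
    apply g_cont_pos; lra.
  - rewrite Rmin_left in Hc by lra. rewrite Rmax_right in Hc by lra.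
    destruct (Hdg y ltac:(lra)) as [m [M [Hm HmM]]].
    specialize (HmM c ltac:(lra)).
    assert (0 < dg c * (y - x)) by (apply Rmult_lt_0_compat; lra). lra.
Qed.

Lemma g_right0 : forall e, 0 < e -> exists d, 0 < d /\ forall s, 0 <= s < d -> Rabs (g s - g 0) < e.
Proof.
  intros e He. destruct Hc1 as [Hc _].
  specialize (Hc 0 ltac:(lra)).
  apply filterlim_locally with (eps := mkposreal e He) in Hc.
  destruct Hc as [d Hd]. exists d. split; [apply cond_pos|].
  intros s Hs. specialize (Hd s).
  assert (Hb : ball 0 d s).
  { unfold ball; simpl; unfold AbsRing_ball, abs, minus, plus, opp; simpl.
    rewrite Ropp_0, Rplus_0_r, Rabs_pos_eq; lra. }
  specialize (Hd Hb ltac:(lra)). exact Hd.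
Qed.

Lemma g_strict x y : 0 <= x < y -> g x < g y.
Proof.
  intros [Hx Hxy]. destruct (Rle_lt_or_eq_dec 0 x Hx) as [Hx'|Hx'].
  - apply g_strict_pos; lra.
  - subst x. apply Rle_lt_trans with (g (y/2)); [|apply g_strict_pos; lra].
    apply Rnot_lt_le; intro Hlt.
    destruct (g_right0 (g 0 - g (y/2)) ltac:(lra)) as [d [Hd Hdd]].
    set (s := Rmin (d/2) (y/4)).
    assert (0 < s) by (apply Rmin_pos; lra).
    assert (s <= d/2) by apply Rmin_l. assert (s <= y/4) by apply Rmin_r.
    specialize (Hdd s ltac:(lra)). apply Rabs_lt_between in Hdd.
    assert (g s < g (y/2)) by (apply g_strict_pos; lra). lra.
Qed.

Lemma g_nonneg x : 0 <= x -> 0 <= g x.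
Proof.
  intros Hx. destruct (Rle_lt_or_eq_dec 0 x Hx). left; rewrite <- Hg0; apply g_strict; lra.
  subst; lra.
Qed.

Lemma G_nonneg_eq p : 0 <= p -> Gfun g p = g p.
Proof.
  intros Hp. unfold Gfun. destruct (Req_EM_T p 0). subst; auto.
  rewrite Rabs_pos_eq by auto. field. auto.
Qed.

Lemma G_nonpos_eq p : p <= 0 -> Gfun g p = - g (- p).
Proof.
  intros Hp. unfold Gfun. destruct (Req_EM_T p 0). subst; rewrite Ropp_0, Hg0; lra.
  rewrite Rabs_left1 by auto. field. auto.
Qed.

Lemma G_strict p p' : p < p' -> Gfun g p < Gfun g p'.
Proof.
  intros H. destruct (Rle_dec 0 p).
  - rewrite !G_nonneg_eq by lra. apply g_strict; lra.
  - destruct (Rle_dec p' 0).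
    + rewrite !G_nonpos_eq by lra. apply Ropp_lt_contravar, g_strict; lra.
    + rewrite G_nonpos_eq by lra. rewrite G_nonneg_eq by lra.
      assert (0 < g (- p)) by (rewrite <- Hg0; apply g_strict; lra).
      assert (0 < g p') by (rewrite <- Hg0; apply g_strict; lra). lra.
Qed.

Lemma G_mono p p' : p <= p' -> Gfun g p <= Gfun g p'.
Proof.
  intros H. destruct (Rle_lt_or_eq_dec _ _ H). left; apply G_strict; auto. subst; lra.
Qed.

Lemma G_inj p p' : Gfun g p = Gfun g p' -> p = p'.
Proof.
  intros H. destruct (Rtotal_order p p') as [Hl|[He|Hl]]; auto.
  - apply G_strict in Hl; lra.
  - apply G_strict in Hl; lra.
Qed.

Lemma G_abs p : Rabs (Gfun g p) = g (Rabs p).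
Proof.
  destruct (Rle_dec 0 p).
  - rewrite G_nonneg_eq, !Rabs_pos_eq; auto. apply g_nonneg; auto.
  - apply Rnot_le_lt in n. rewrite G_nonpos_eq by lra. rewrite Rabs_Ropp, (Rabs_left p) by lra.
    apply Rabs_pos_eq, g_nonneg; lra.
Qed.

Lemma G_cont p : continuity_pt (Gfun g) p.
Proof.
  destruct (Rtotal_order p 0) as [Hp|[Hp|Hp]].
  - apply continuity_pt_locally_ext with (f := fun z => - g (- z)) (a := - p); [lra| |].
    + intros y Hy. unfold Rdist in Hy. apply Rabs_lt_between in Hy.
      rewrite G_nonpos_eq; auto; lra.
    + apply continuity_pt_opp.
      apply (continuity_pt_comp Ropp g).
      * apply continuity_pt_opp, derivable_continuous_pt, derivable_pt_id.
      * apply g_cont_pos. lra.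
  - subst. intros e He. destruct (g_right0 e He) as [d [Hd Hdd]].
    exists d. split; auto. intros x [_ Hx]. unfold R_dist in *. simpl in *. unfold R_dist in *.
    rewrite Rminus_0_r in Hx.
    assert (HG0 : Gfun g 0 = 0) by (rewrite G_nonneg_eq; lra).
    rewrite HG0, Rminus_0_r, G_abs.
    specialize (Hdd (Rabs x) ltac:(split; [apply Rabs_pos| auto])).
    rewrite Hg0, Rminus_0_r in Hdd. rewrite Rabs_pos_eq in Hdd; auto.
    apply g_nonneg, Rabs_pos.
  - apply continuity_pt_locally_ext with (f := g) (a := p); [lra| |].
    + intros y Hy. unfold Rdist in Hy. apply Rabs_lt_between in Hy.
      rewrite G_nonneg_eq; auto; lra.
    + apply g_cont_pos; auto.
Qed.

End GSec.

Definition cl (Rc r : R) : R := Rmax (- Rc) (Rmin Rc r).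

Lemma cl_mono Rc a b : a <= b -> cl Rc a <= cl Rc b.
Proof.
  intros H. unfold cl. unfold Rmax, Rmin.
  repeat (destruct Rle_dec); lra.
Qed.

Lemma cl_lip Rc a b : 0 <= Rc -> Rabs (cl Rc a - cl Rc b) <= Rabs (a - b).
Proof.
  intros H. unfold cl, Rmax, Rmin.
  repeat (destruct Rle_dec); unfold Rabs; repeat destruct Rcase_abs; lra.
Qed.

Lemma cl_bound Rc a : 0 <= Rc -> Rabs (cl Rc a) <= Rc.
Proof.
  intros H. unfold cl, Rmax, Rmin.
  repeat (destruct Rle_dec); unfold Rabs; repeat destruct Rcase_abs; lra.
Qed.

Lemma cl_id Rc a : Rabs a <= Rc -> cl Rc a = a.
Proof.
  intros H. unfold cl, Rmax, Rmin. revert H.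
  repeat (destruct Rle_dec); unfold Rabs; repeat destruct Rcase_abs; lra.
Qed.

Lemma cl_neg Rc a : 0 <= Rc -> Rc <= a -> cl Rc (- a) = - Rc.
Proof.
  intros H H'. unfold cl, Rmax, Rmin.
  repeat (destruct Rle_dec); lra.
Qed.

Lemma cl_pos Rc a : 0 <= Rc -> Rc <= a -> cl Rc a = Rc.
Proof.
  intros H H'. unfold cl, Rmax, Rmin.
  repeat (destruct Rle_dec); lra.
Qed.

Lemma Rabs_sub_le a b : Rabs (a - b) <= Rabs a + Rabs b.
Proof. unfold Rminus. eapply Rle_trans; [apply Rabs_triang|]. rewrite Rabs_Ropp. lra. Qed.

Lemma sumN_minus n f h : sumN n f - sumN n h = sumN n (fun k => f k - h k).
Proof.
  induction n. rewrite !sumN_0; lra. rewrite !sumN_S. rewrite <- IHn. lra.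
Qed.

Section Sys.
Variable N : nat.
Variables kappa alpha : R.
Variables g dg : R -> R.
Variables q0 nu : nat -> R.
Hypothesis HN : (1 <= N)%nat.
Hypothesis Hk : 0 < kappa.
Hypothesis Ha : 0 < alpha < 1.
Hypothesis Hc1 : C1_nonneg g dg.
Hypothesis Hg0 : g 0 = 0.
Hypothesis Hdg : forall b, 0 <= b -> exists m M, 0 < m /\ forall x, 0 <= x <= b -> m <= dg x <= M.

Lemma gs x y : 0 <= x < y -> g x < g y.
Proof. intros; eapply g_strict; eauto. Qed.
Lemma gnn x : 0 <= x -> 0 <= g x.
Proof. intros; eapply g_nonneg; eauto. Qed.
Lemma Gm p p' : p <= p' -> Gfun g p <= Gfun g p'.
Proof. intros; eapply G_mono; eauto. Qed.
Lemma Gs p p' : p < p' -> Gfun g p < Gfun g p'.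
Proof. intros; eapply G_strict; eauto. Qed.
Lemma Gi p p' : Gfun g p = Gfun g p' -> p = p'.
Proof. intros; eapply G_inj; eauto. Qed.
Lemma Gabs p : Rabs (Gfun g p) = g (Rabs p).
Proof. intros; eapply G_abs; eauto. Qed.
Lemma Gc p : continuity_pt (Gfun g) p.
Proof. intros; eapply G_cont; eauto. Qed.

Lemma Pm x y : x <= y -> Psi alpha x <= Psi alpha y.
Proof. intros; apply Psi_mono; auto. Qed.

Definition cc := kappa / INR N.
Lemma cc_pos : 0 < cc.
Proof. unfold cc. apply Rdiv_lt_0_compat; auto. apply lt_0_INR; lia. Qed.

Definition argF (x : nat -> R) (i : nat) : R :=
  nu i + kappa / INR N * sumN N (fun k => Psi alpha (x k - x i)).
Definition F (x : nat -> R) (i : nat) : R := Gfun g (argF x i).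

Lemma vel_F q i t : vel N kappa alpha g nu q i t = F (fun k => q k t) i.
Proof. reflexivity. Qed.

Lemma F_cmp x y i j : nu i <= nu j -> (forall k, (k < N)%nat -> x k - x i <= y k - y j) ->
  F x i <= F y j.
Proof.
  intros Hn Hk'. unfold F, argF. apply Gm.
  assert (sumN N (fun k => Psi alpha (x k - x i)) <= sumN N (fun k => Psi alpha (y k - y j))).
  { apply sumN_le. intros k Hkk. apply Psi_mono; auto. }
  pose proof cc_pos. unfold cc in H0.
  apply Rplus_le_compat; auto. apply Rmult_le_compat_l; lra.
Qed.

Section Clamp.
Variable Rc : R.
Hypothesis HRc : 0 < Rc.

Definition argFt (x : nat -> R) (i : nat) : R :=
  nu i + cc * sumN N (fun k => Psi alpha (cl Rc (x k - x i))).
Definition Ft (x : nat -> R) (i : nat) : R := Gfun g (argFt x i).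

Lemma Ft_cmp x y i j : nu i <= nu j -> (forall k, (k < N)%nat -> x k - x i <= y k - y j) ->
  Ft x i <= Ft y j.
Proof.
  intros Hn Hk'. unfold Ft, argFt. apply Gm.
  assert (sumN N (fun k => Psi alpha (cl Rc (x k - x i))) <=
          sumN N (fun k => Psi alpha (cl Rc (y k - y j)))).
  { apply sumN_le. intros k Hkk. apply Psi_mono, cl_mono; auto. }
  pose proof cc_pos.
  apply Rplus_le_compat; auto. apply Rmult_le_compat_l; lra.
Qed.

Definition Abnd := sumN N (fun k => Rabs (nu k)) + cc * INR N * Psi alpha Rc.
Definition Vb := g Abnd + 1.

Lemma argFt_bound x i : (i < N)%nat -> Rabs (argFt x i) <= Abnd.
Proof.
  intros Hi. unfold argFt, Abnd.
  eapply Rle_trans; [apply Rabs_triang|]. apply Rplus_le_compat.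
  - apply (abs_le_sumN N nu i Hi).
  - pose proof cc_pos. rewrite Rabs_mult, (Rabs_pos_eq cc) by lra. rewrite Rmult_assoc.
    apply Rmult_le_compat_l; [lra|]. apply sumN_bound.
    intros k Hk'. apply Psi_abs_bound; auto. apply cl_bound; lra.
Qed.

Lemma Abnd_nonneg : 0 <= Abnd.
Proof.
  pose proof (argFt_bound (fun _ => 0) 0 ltac:(lia)). pose proof (Rabs_pos (argFt (fun _ => 0) 0)). lra.
Qed.

Lemma Ft_bound x i : (i < N)%nat -> Rabs (Ft x i) <= Vb.
Proof.
  intros Hi. unfold Ft, Vb. rewrite Gabs.
  pose proof (argFt_bound x i Hi).
  destruct (Rle_lt_or_eq_dec _ _ H).
  - assert (g (Rabs (argFt x i)) < g Abnd) by (apply gs; split; auto; apply Rabs_pos). lra.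
  - rewrite e; lra.
Qed.

Lemma Vb_pos : 0 < Vb.
Proof. unfold Vb. pose proof (gnn Abnd Abnd_nonneg). lra. Qed.

Lemma Ft_modulus : forall e, 0 < e -> exists r, 0 < r /\ forall x y,
  (forall k, (k < N)%nat -> Rabs (x k - y k) <= r) -> forall i, (i < N)%nat -> Rabs (Ft x i - Ft y i) <= e.
Proof.
  intros e He.
  assert (HG := Heine (Gfun g) (fun z => - Abnd <= z <= Abnd) (compact_P3 _ _)
    (fun z _ => Gc z)).
  destruct (HG (mkposreal e He)) as [d1 Hd1].
  assert (HP := Heine (Psi alpha) (fun z => - Rc <= z <= Rc) (compact_P3 _ _)
    (fun z _ => Psi_cont alpha Ha z)).
  pose proof cc_pos.
  assert (HNp : 0 < INR N) by (apply lt_0_INR; lia).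
  set (e2 := d1 / (2 * (cc * INR N + 1))).
  assert (He2 : 0 < e2) by (unfold e2; apply Rdiv_lt_0_compat; [apply cond_pos| nra]).
  destruct (HP (mkposreal e2 He2)) as [d2 Hd2].
  exists (d2 / 4). split; [destruct d2; simpl; lra|].
  intros x y Hxy i Hi. unfold Ft. left. apply Hd1.
  - pose proof (argFt_bound x i Hi). apply Rabs_le_between in H0. lra.
  - pose proof (argFt_bound y i Hi). apply Rabs_le_between in H0. lra.
  - unfold argFt.
    replace (nu i + cc * sumN N (fun k => Psi alpha (cl Rc (x k - x i))) -
       (nu i + cc * sumN N (fun k => Psi alpha (cl Rc (y k - y i)))))
    with (cc * (sumN N (fun k => Psi alpha (cl Rc (x k - x i))) -
       sumN N (fun k => Psi alpha (cl Rc (y k - y i))))) by ring.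
    rewrite sumN_minus, Rabs_mult, (Rabs_pos_eq cc) by lra.
    apply Rle_lt_trans with (cc * (INR N * e2)).
    + apply Rmult_le_compat_l; [lra|]. apply sumN_bound.
      intros k Hk'. left. apply Hd2.
      * pose proof (cl_bound Rc (x k - x i) ltac:(lra)). apply Rabs_le_between in H0. lra.
      * pose proof (cl_bound Rc (y k - y i) ltac:(lra)). apply Rabs_le_between in H0. lra.
      * eapply Rle_lt_trans; [apply cl_lip; lra|].
        pose proof (Hxy k Hk'). pose proof (Hxy i Hi).
        replace (x k - x i - (y k - y i)) with ((x k - y k) - (x i - y i)) by ring.
        eapply Rle_lt_trans; [apply Rabs_sub_le|].
        destruct d2; simpl in *; lra.
    + unfold e2. simpl.
      assert (0 < pos d1) by apply cond_pos.
      apply Rlt_le_trans with (d1 / 2); [|lra].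
      unfold Rdiv. rewrite Rinv_mult.
      replace (cc * (INR N * (d1 * (/ 2 * / (cc * INR N + 1))))) with
        ((d1 / 2) * (cc * INR N / (cc * INR N + 1))) by (field; nra).
      assert (cc * INR N / (cc * INR N + 1) < 1).
      { apply Rmult_lt_reg_r with (cc * INR N + 1); [nra|].
        unfold Rdiv; rewrite Rmult_assoc, Rinv_l by nra. lra. }
      assert (0 < d1 / 2) by lra.
      unfold Rdiv at 1 in H2. nra.
Qed.


Fixpoint ey (h : R) (k : nat) : nat -> R :=
  match k with
  | O => q0
  | S k' => fun i => ey h k' i + h * Ft (ey h k') i
  end.
Definition kf (h t : R) : nat := Z.to_nat (Int_part (t / h)).
Definition X (h t : R) (i : nat) : R :=
  ey h (kf h t) i + (t - INR (kf h t) * h) * Ft (ey h (kf h t)) i.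

Lemma kf_unique h t k : 0 < h -> INR k * h <= t < (INR k + 1) * h -> kf h t = k.
Proof.
  intros Hh [H1 H2]. unfold kf.
  assert (E : Z.of_nat k = Int_part (t / h)).
  { apply Int_part_spec. rewrite <- INR_IZR_INZ. split.
    - apply Rmult_lt_reg_r with h; auto. unfold Rdiv.
      rewrite Rmult_minus_distr_r, Rmult_assoc, Rinv_l by lra. lra.
    - apply Rmult_le_reg_r with h; auto. unfold Rdiv.
      rewrite Rmult_assoc, Rinv_l by lra. lra. }
  rewrite <- E. apply Nat2Z.id.
Qed.

Lemma kf_spec h t : 0 < h -> 0 <= t -> INR (kf h t) * h <= t < (INR (kf h t) + 1) * h.
Proof.
  intros Hh Ht. unfold kf.
  destruct (base_Int_part (t / h)) as [H1 H2].
  assert (Htdh : 0 <= t / h) by (apply Rdiv_le_0_compat; lra).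
  assert (Hz : (0 <= Int_part (t / h))%Z) by (apply le_IZR; apply Rnot_lt_le; intro Hc;
    assert (IZR (Int_part (t/h)) <= -1) by (apply IZR_le; apply lt_IZR in Hc; lia); lra).
  rewrite INR_IZR_INZ, Z2Nat.id by auto.
  split.
  - apply Rmult_le_reg_r with (/ h); [apply Rinv_0_lt_compat; lra|].
    rewrite Rmult_assoc, Rinv_r by lra. unfold Rdiv in H1. lra.
  - apply Rmult_lt_reg_r with (/ h); [apply Rinv_0_lt_compat; lra|].
    rewrite Rmult_assoc, Rinv_r by lra. unfold Rdiv in H2. lra.
Qed.

Lemma X_cell h t k i : 0 < h -> INR k * h <= t <= (INR k + 1) * h ->
  X h t i = ey h k i + (t - INR k * h) * Ft (ey h k) i.
Proof.
  intros Hh [H1 H2]. destruct (Rle_lt_or_eq_dec _ _ H2) as [Hlt|Heq].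
  - unfold X. rewrite (kf_unique h t k); auto.
  - unfold X. rewrite (kf_unique h t (S k)); auto.
    + cbn [ey]. rewrite S_INR, Heq. ring.
    + rewrite S_INR. split; [lra|]. nra.
Qed.

Lemma X_0 h i : 0 < h -> X h 0 i = q0 i.
Proof.
  intros Hh. rewrite (X_cell h 0 0); [simpl; ring| auto |simpl; lra].
Qed.

Lemma X_incr h i s t c0 d : 0 < h -> 0 <= s <= t ->
  (forall k, INR k * h <= t -> s < (INR k + 1) * h -> Rabs (Ft (ey h k) i - c0) <= d) ->
  Rabs (X h t i - X h s i - (t - s) * c0) <= d * (t - s).
Proof.
  intros Hh Hst.
  destruct (kf_spec h s Hh (proj1 Hst)) as [Hk1 Hk2].
  set (k := kf h s) in *.
  assert (Hm : forall m t, s <= t <= (INR k + 1 + INR m) * h ->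
    (forall k, INR k * h <= t -> s < (INR k + 1) * h -> Rabs (Ft (ey h k) i - c0) <= d) ->
    Rabs (X h t i - X h s i - (t - s) * c0) <= d * (t - s)).
  { induction m; intros t' Ht' Hyp.
    - simpl in Ht'. rewrite Rplus_0_r in Ht'.
      rewrite (X_cell h t' k), (X_cell h s k) by (auto; lra).
      replace (ey h k i + (t' - INR k * h) * Ft (ey h k) i -
        (ey h k i + (s - INR k * h) * Ft (ey h k) i) - (t' - s) * c0)
        with ((t' - s) * (Ft (ey h k) i - c0)) by ring.
      rewrite Rabs_mult, Rabs_pos_eq by lra. rewrite Rmult_comm.
      apply Rmult_le_compat_r; [lra|]. apply Hyp; lra.
    - rewrite S_INR in Ht'.
      destruct (Rle_dec t' ((INR k + 1 + INR m) * h)) as [Hle|Hgt].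
      + apply IHm; auto. lra.
      + apply Rnot_le_lt in Hgt.
        set (u := (INR k + 1 + INR m) * h).
        assert (Hud : u = (INR k + 1 + INR m) * h) by reflexivity.
        assert (Hu : s <= u).
        { unfold u. assert (0 <= INR m * h) by (apply Rmult_le_pos; [apply pos_INR|lra]). nra. }
        assert (IH := IHm u ltac:(split; [exact Hu| unfold u; lra])).
        assert (HK : INR (k + S m) = INR k + 1 + INR m) by (rewrite plus_INR, S_INR; ring).
        rewrite (X_cell h t' (k + S m)%nat) in * by (auto; rewrite HK; unfold u in *; nra).
        assert (Xu : X h u i = ey h (k + S m) i + (u - INR (k + S m) * h) * Ft (ey h (k + S m)) i).
        { apply X_cell; auto. rewrite HK. unfold u. nra. }
        assert (Hv : Rabs (Ft (ey h (k + S m)) i - c0) <= d).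
        { apply Hyp; rewrite HK; unfold u in *; nra. }
        assert (IH' : Rabs (X h u i - X h s i - (u - s) * c0) <= d * (u - s)).
        { apply IH. intros k' H1 H2. apply Hyp; unfold u in H1; lra. }
        rewrite Xu in IH'. rewrite HK in *.
        replace (ey h (k + S m) i + (t' - (INR k + 1 + INR m) * h) * Ft (ey h (k + S m)) i -
           X h s i - (t' - s) * c0) with
          ((ey h (k + S m) i + (u - (INR k + 1 + INR m) * h) * Ft (ey h (k + S m)) i - X h s i -
             (u - s) * c0) + (t' - u) * (Ft (ey h (k + S m)) i - c0)) by (unfold u; ring).
        eapply Rle_trans; [apply Rabs_triang|].
        rewrite Rabs_mult, (Rabs_pos_eq (t' - u)) by lra.
        assert ((t' - u) * Rabs (Ft (ey h (k + S m)) i - c0) <= (t' - u) * d)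
          by (apply Rmult_le_compat_l; lra).
        lra. }
  intros Hyp. apply (Hm (Z.to_nat (up (t / h)))); auto.
  split; [lra|].
  destruct (archimed (t / h)) as [A1 A2].
  assert (Htdh : 0 <= t / h) by (apply Rdiv_le_0_compat; lra).
  rewrite (INR_IZR_INZ (Z.to_nat _)), Z2Nat.id by (apply le_IZR; lra).
  assert (t <= IZR (up (t / h)) * h).
  { apply Rmult_le_reg_r with (/ h); [apply Rinv_0_lt_compat; lra|].
    rewrite Rmult_assoc, Rinv_r by lra. unfold Rdiv in A1. lra. }
  assert (0 <= INR k) by apply pos_INR. nra.
Qed.

Lemma X_lip h s t i : 0 < h -> 0 <= s <= t -> (i < N)%nat ->
  Rabs (X h t i - X h s i) <= Vb * (t - s).
Proof.
  intros Hh Hst Hi. pose proof (X_incr h i s t 0 Vb Hh Hst) as H.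
  rewrite Rmult_0_r, Rminus_0_r in H. apply H.
  intros k _ _. rewrite Rminus_0_r. apply Ft_bound; auto.
Qed.

Lemma X_grid h k i : 0 < h -> X h (INR k * h) i = ey h k i.
Proof.
  intros Hh. rewrite (X_cell h _ k); [ring|auto|split; lra].
Qed.

Definition defect (A : R -> nat -> R) (e eta : R) : Prop :=
  forall s t, 0 <= s <= t -> t <= s + eta -> forall i, (i < N)%nat ->
    Rabs (A t i - A s i - (t - s) * Ft (A t) i) <= e * (t - s).

Lemma X_defect : forall e, 0 < e -> exists eta, 0 < eta /\
  forall h, 0 < h <= eta -> defect (X h) e eta.
Proof.
  intros e He. destruct (Ft_modulus e He) as [r [Hr Hmod]].
  pose proof Vb_pos.
  exists (r / (2 * Vb)). split; [apply Rdiv_lt_0_compat; lra|].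
  intros h [Hh Hheta] s t Hst Hte i Hi.
  apply X_incr; auto. intros k Hk1 Hk2.
  apply Hmod; auto.
  intros j Hj. rewrite <- (X_grid h k j Hh).
  assert (Hkh : 0 <= INR k * h) by (apply Rmult_le_pos; [apply pos_INR|lra]).
  rewrite Rabs_minus_sym.
  eapply Rle_trans; [apply X_lip; auto; lra|].
  assert (t - INR k * h <= r / Vb).
  { assert (Vb * (r / (2 * Vb)) = r / 2) by (field; lra).
    assert (r / Vb = 2 * (r / (2 * Vb))) by (field; lra). nra. }
  apply Rmult_le_reg_r with (/ Vb); [apply Rinv_0_lt_compat; lra|].
  replace (Vb * (t - INR k * h) * / Vb) with (t - INR k * h) by (field; lra). exact H0.
Qed.

Lemma compare A B e eta : 0 < eta -> (forall i, (i < N)%nat -> A 0 i = B 0 i) ->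
  defect A e eta -> defect B e eta ->
  forall t, 0 <= t -> forall i, (i < N)%nat -> A t i - B t i <= 2 * e * t.
Proof.
  intros Heta H0 DA DB.
  apply (chain (fun t => forall i, (i < N)%nat -> A t i - B t i <= 2 * e * t) eta Heta).
  - intros i Hi. rewrite H0; auto. lra.
  - intros s t Hst Hte Hs.
    destruct (argmax_ex N (fun k => A t k - B t k) HN) as [i0 [Hi0 Hmax]].
    assert (Hc : Ft (A t) i0 <= Ft (B t) i0).
    { apply Ft_cmp; [lra|]. intros k Hk'. specialize (Hmax k Hk'). simpl in Hmax. lra. }
    specialize (DA s t Hst Hte i0 Hi0). specialize (DB s t Hst Hte i0 Hi0).
    specialize (Hs i0 Hi0).
    apply Rabs_le_between in DA. apply Rabs_le_between in DB.
    assert (A t i0 - B t i0 <= 2 * e * t).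
    { assert ((t - s) * Ft (A t) i0 <= (t - s) * Ft (B t) i0) by (apply Rmult_le_compat_l; lra).
      lra. }
    intros i Hi. specialize (Hmax i Hi). simpl in Hmax. lra.
Qed.

Definition hn (n : nat) : R := / (INR n + 1).
Definition Xn (n : nat) := X (hn n).

Lemma hn_pos n : 0 < hn n.
Proof. unfold hn. apply Rinv_0_lt_compat. pose proof (pos_INR n). lra. Qed.

Lemma hn_small eta : 0 < eta -> exists n0, forall n, (n0 <= n)%nat -> hn n <= eta.
Proof.
  intros He. destruct (archimed (/ eta)) as [A1 A2].
  assert (0 < / eta) by (apply Rinv_0_lt_compat; lra).
  exists (Z.to_nat (up (/ eta))). intros n Hn. unfold hn.
  apply le_INR in Hn. rewrite INR_IZR_INZ, Z2Nat.id in Hn by (apply le_IZR; lra).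
  rewrite <- (Rinv_inv eta). apply Rinv_le_contravar; [auto|lra].
Qed.

Lemma Xn_cauchy : forall e, 0 < e -> exists n0, forall n m, (n0 <= n)%nat -> (n0 <= m)%nat ->
  forall t, 0 <= t -> forall i, (i < N)%nat -> Rabs (Xn n t i - Xn m t i) <= 2 * e * t.
Proof.
  intros e He. destruct (X_defect e He) as [eta [Heta Hd]].
  destruct (hn_small eta Heta) as [n0 Hn0].
  exists n0. intros n m Hn Hm t Ht i Hi.
  assert (D1 := Hd (hn n) (conj (hn_pos n) (Hn0 n Hn))).
  assert (D2 := Hd (hn m) (conj (hn_pos m) (Hn0 m Hm))).
  assert (H0 : forall j, (j < N)%nat -> Xn n 0 j = Xn m 0 j).
  { intros j Hj. unfold Xn. rewrite !X_0 by apply hn_pos. auto. }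
  pose proof (compare (Xn n) (Xn m) e eta Heta H0 D1 D2 t Ht i Hi).
  assert (H0' : forall j, (j < N)%nat -> Xn m 0 j = Xn n 0 j) by (intros; symmetry; auto).
  pose proof (compare (Xn m) (Xn n) e eta Heta H0' D2 D1 t Ht i Hi).
  apply Rabs_le_between. lra.
Qed.

Definition Q (t : R) (i : nat) : R := real (Lim_seq (fun n => Xn n t i)).

Lemma Q_lim t i : 0 <= t -> (i < N)%nat -> Un_cv (fun n => Xn n t i) (Q t i).
Proof.
  intros Ht Hi.
  assert (Hc : Cauchy_crit (fun n => Xn n t i)).
  { intros eps Heps.
    set (e := eps / (2 * (2 * t + 1))).
    assert (He : 0 < e) by (unfold e; apply Rdiv_lt_0_compat; lra).
    destruct (Xn_cauchy e He) as [n0 Hn0]. exists n0. intros n m Hn Hm.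
    unfold Rdist. eapply Rle_lt_trans; [apply Hn0; auto; lia|].
    unfold e. apply Rmult_lt_reg_r with (2 * (2 * t + 1)); [lra|].
    field_simplify; [|lra]. nra. }
  destruct (Rcomplete.R_complete _ Hc) as [l Hl].
  unfold Q. rewrite (is_lim_seq_unique _ l). simpl. auto.
  apply is_lim_seq_Reals. auto.
Qed.

Lemma Q_approx : forall e, 0 < e -> exists n0, forall n, (n0 <= n)%nat ->
  forall t, 0 <= t -> forall i, (i < N)%nat -> Rabs (Q t i - Xn n t i) <= 2 * e * t.
Proof.
  intros e He. destruct (Xn_cauchy e He) as [n0 Hn0]. exists n0.
  intros n Hn t Ht i Hi. apply Rle_plus_epsilon. intros z Hz.
  destruct (Q_lim t i Ht Hi z Hz) as [n1 Hn1].
  set (m := max n n1).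
  specialize (Hn1 m ltac:(unfold m; lia)). unfold R_dist in Hn1.
  specialize (Hn0 n m Hn ltac:(unfold m; lia) t Ht i Hi).
  replace (Q t i - Xn n t i) with (- (Xn m t i - Q t i) + (Xn m t i - Xn n t i)) by ring.
  eapply Rle_trans; [apply Rabs_triang|]. rewrite Rabs_Ropp, (Rabs_minus_sym (Xn m t i) (Xn n t i)). lra.
Qed.

Lemma Q_0 i : (i < N)%nat -> Q 0 i = q0 i.
Proof.
  intros Hi. apply Rle_antisym; apply Rle_plus_epsilon; intros z Hz;
  destruct (Q_lim 0 i ltac:(lra) Hi z Hz) as [n1 Hn1]; specialize (Hn1 n1 (le_n _));
  unfold R_dist, Xn in Hn1; rewrite X_0 in Hn1 by apply hn_pos;
  apply Rabs_lt_between in Hn1; lra.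
Qed.

Lemma Q_lip s t i : 0 <= s <= t -> (i < N)%nat -> Rabs (Q t i - Q s i) <= Vb * (t - s).
Proof.
  intros Hst Hi. apply Rle_plus_epsilon. intros z Hz.
  destruct (Q_lim t i ltac:(lra) Hi (z/2) ltac:(lra)) as [n1 Hn1].
  destruct (Q_lim s i ltac:(lra) Hi (z/2) ltac:(lra)) as [n2 Hn2].
  set (m := max n1 n2).
  specialize (Hn1 m ltac:(unfold m; lia)). specialize (Hn2 m ltac:(unfold m; lia)).
  unfold R_dist in *.
  pose proof (X_lip (hn m) s t i (hn_pos m) Hst Hi). fold (Xn m) in H.
  replace (Q t i - Q s i) with (- (Xn m t i - Q t i) + (Xn m t i - Xn m s i) + (Xn m s i - Q s i)) by ring.
  eapply Rle_trans; [apply Rabs_triang|]. eapply Rle_trans; [apply Rplus_le_compat_r, Rabs_triang|].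
  rewrite Rabs_Ropp. lra.
Qed.

Lemma Q_defect : forall e, 0 < e -> exists eta, 0 < eta /\ defect Q e eta.
Proof.
  intros e He. destruct (X_defect (e/2) ltac:(lra)) as [eta [Heta Hd]].
  destruct (hn_small eta Heta) as [n0 Hn0].
  exists eta. split; auto. intros s t Hst Hte i Hi.
  destruct (Ft_modulus (e/2) ltac:(lra)) as [r [Hr Hmod]].
  apply Rle_plus_epsilon. intros z Hz.
  set (z' := Rmin (z/2) r).
  assert (Hz' : 0 < z') by (apply Rmin_pos; lra).
  assert (Hz1 : z' <= z/2) by apply Rmin_l. assert (Hz2 : z' <= r) by apply Rmin_r.
  set (e' := z' / (2 * t + 1)).
  assert (He' : 0 < e') by (unfold e'; apply Rdiv_lt_0_compat; lra).
  assert (He't : 2 * e' * t <= z').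
  { unfold e'. apply Rmult_le_reg_r with (2 * t + 1); [lra|].
    field_simplify; [|lra]. nra. }
  assert (He's : 2 * e' * s <= z').
  { assert (2 * e' * s <= 2 * e' * t) by (apply Rmult_le_compat_l; lra). lra. }
  destruct (Q_approx e' He') as [n1 Hn1].
  set (n := max n0 n1).
  assert (Dn := Hd (hn n) (conj (hn_pos n) (Hn0 n ltac:(unfold n; lia))) s t Hst Hte i Hi).
  fold (Xn n) in Dn.
  assert (At : forall j, (j < N)%nat -> Rabs (Q t j - Xn n t j) <= z').
  { intros j Hj. eapply Rle_trans; [apply (Hn1 n ltac:(unfold n; lia) t ltac:(lra) j Hj)|lra]. }
  assert (As : Rabs (Q s i - Xn n s i) <= z').
  { eapply Rle_trans; [apply (Hn1 n ltac:(unfold n; lia) s ltac:(lra) i Hi)|lra]. }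
  assert (HF : Rabs (Ft (Xn n t) i - Ft (Q t) i) <= e / 2).
  { apply Hmod; auto. intros j Hj. rewrite Rabs_minus_sym. eapply Rle_trans; [apply At; auto| lra]. }
  replace (Q t i - Q s i - (t - s) * Ft (Q t) i) with
    ((Xn n t i - Xn n s i - (t - s) * Ft (Xn n t) i) + (Q t i - Xn n t i) - (Q s i - Xn n s i)
      + (t - s) * (Ft (Xn n t) i - Ft (Q t) i)) by ring.
  eapply Rle_trans; [apply Rabs_triang|].
  eapply Rle_trans; [apply Rplus_le_compat_r; apply Rabs_sub_le|].
  eapply Rle_trans; [apply Rplus_le_compat_r, Rplus_le_compat_r, Rabs_triang|].
  rewrite Rabs_mult, (Rabs_pos_eq (t - s)) by lra.
  pose proof (At i Hi).
  assert ((t - s) * Rabs (Ft (Xn n t) i - Ft (Q t) i) <= (t - s) * (e/2)) by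
    (apply Rmult_le_compat_l; lra).
  lra.
Qed.

Hypothesis HRnu : forall i j, (i < N)%nat -> (j < N)%nat -> nu i - nu j <= 2 * cc * Psi alpha Rc.
Hypothesis HRq : forall i j, (i < N)%nat -> (j < N)%nat -> q0 i - q0 j <= Rc.

Lemma cl_0 : cl Rc 0 = 0.
Proof. apply cl_id. rewrite Rabs_R0. lra. Qed.

Lemma Q_diam_eps e : 0 < e -> forall t, 0 <= t -> forall i j, (i < N)%nat -> (j < N)%nat ->
  Q t i - Q t j <= Rc + 2 * e * t.
Proof.
  intros He. destruct (Q_defect e He) as [eta [Heta Hd]].
  apply (chain (fun t => forall i j, (i < N)%nat -> (j < N)%nat -> Q t i - Q t j <= Rc + 2 * e * t) eta Heta).
  - intros i j Hi Hj. rewrite !Q_0 by auto. pose proof (HRq i j Hi Hj). lra.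
  - intros s t Hst Hte Hs.
    destruct (argmax_ex N (fun k => Q t k) HN) as [i0 [Hi0 Hmax]].
    destruct (argmin_ex N (fun k => Q t k) HN) as [j0 [Hj0 Hmin]].
    simpl in Hmax, Hmin.
    assert (Hpair : Q t i0 - Q t j0 <= Rc + 2 * e * t).
    { destruct (Rle_dec (Q t i0 - Q t j0) Rc) as [Hle|Hgt].
      - assert (0 <= 2 * e * t) by (apply Rmult_le_pos; lra). lra.
      - apply Rnot_le_lt in Hgt.
        assert (HF : Ft (Q t) i0 <= Ft (Q t) j0).
        { unfold Ft. apply Gm. unfold argFt. pose proof cc_pos.
          assert (S1 : sumN N (fun k => Psi alpha (cl Rc (Q t k - Q t i0))) <= - Psi alpha Rc).
          { eapply Rle_trans; [apply (sumN_term_le _ _ j0); auto|].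
            - intros k Hk'. rewrite <- (Psi_zero alpha). apply Pm. rewrite <- cl_0.
              apply cl_mono. specialize (Hmax k Hk'). lra.
            - replace (Q t j0 - Q t i0) with (- (Q t i0 - Q t j0)) by ring.
              rewrite cl_neg by lra. rewrite Psi_odd. lra. }
          assert (S2 : Psi alpha Rc <= sumN N (fun k => Psi alpha (cl Rc (Q t k - Q t j0)))).
          { eapply Rle_trans; [|apply (sumN_term_ge _ _ i0); auto].
            - simpl. rewrite cl_pos by lra. lra.
            - intros k Hk'. rewrite <- (Psi_zero alpha). apply Pm. rewrite <- cl_0.
              apply cl_mono. specialize (Hmin k Hk'). lra. }
          pose proof (HRnu i0 j0 Hi0 Hj0).
          assert (cc * sumN N (fun k => Psi alpha (cl Rc (Q t k - Q t i0))) <= cc * - Psi alpha Rc)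
            by (apply Rmult_le_compat_l; lra).
          assert (cc * Psi alpha Rc <= cc * sumN N (fun k => Psi alpha (cl Rc (Q t k - Q t j0))))
            by (apply Rmult_le_compat_l; lra).
          lra. }
        pose proof (Hd s t Hst Hte i0 Hi0) as D1. pose proof (Hd s t Hst Hte j0 Hj0) as D2.
        apply Rabs_le_between in D1. apply Rabs_le_between in D2.
        pose proof (Hs i0 j0 Hi0 Hj0).
        assert ((t - s) * Ft (Q t) i0 <= (t - s) * Ft (Q t) j0) by (apply Rmult_le_compat_l; lra).
        lra. }
    intros i j Hi Hj. specialize (Hmax i Hi). specialize (Hmin j Hj). lra.
Qed.

Lemma Q_diam t i j : 0 <= t -> (i < N)%nat -> (j < N)%nat -> Q t i - Q t j <= Rc.
Proof.
  intros Ht Hi Hj. apply Rle_plus_epsilon. intros z Hz.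
  set (e := z / (2 * t + 1)).
  assert (He : 0 < e) by (unfold e; apply Rdiv_lt_0_compat; lra).
  pose proof (Q_diam_eps e He t Ht i j Hi Hj).
  assert (2 * e * t <= z).
  { unfold e. apply Rmult_le_reg_r with (2 * t + 1); [lra|]. field_simplify; [|lra]. nra. }
  lra.
Qed.

Lemma Q_FtF t i : 0 <= t -> (i < N)%nat -> Ft (Q t) i = F (Q t) i.
Proof.
  intros Ht Hi. unfold Ft, F, argFt, argF, cc. f_equal. f_equal. f_equal.
  apply sumN_ext. intros k Hk'. f_equal. apply cl_id.
  pose proof (Q_diam t k i Ht Hk' Hi). pose proof (Q_diam t i k Ht Hi Hk').
  apply Rabs_le_between. lra.
Qed.

Lemma Q_lip' s t i : 0 <= s -> 0 <= t -> (i < N)%nat -> Rabs (Q t i - Q s i) <= Vb * Rabs (t - s).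
Proof.
  intros Hs Ht Hi. destruct (Rle_dec s t).
  - rewrite (Rabs_pos_eq (t - s)) by lra. apply Q_lip; auto.
  - rewrite Rabs_minus_sym, (Rabs_minus_sym t). rewrite (Rabs_pos_eq (s - t)) by lra.
    apply Q_lip; auto; lra.
Qed.

Lemma FtQ_cont t i : 0 <= t -> (i < N)%nat -> forall e, 0 < e -> exists d, 0 < d /\
  forall u, 0 <= u -> Rabs (u - t) < d -> Rabs (Ft (Q u) i - Ft (Q t) i) <= e.
Proof.
  intros Ht Hi e He. destruct (Ft_modulus e He) as [r [Hr Hmod]].
  pose proof Vb_pos. exists (r / Vb). split; [apply Rdiv_lt_0_compat; lra|].
  intros u Hu Hut. apply Hmod; auto. intros k Hk'.
  eapply Rle_trans; [apply Q_lip'; auto|].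
  apply Rmult_le_reg_r with (/ Vb); [apply Rinv_0_lt_compat; lra|].
  replace (Vb * Rabs (u - t) * / Vb) with (Rabs (u - t)) by (field; lra). unfold Rdiv in Hut. lra.
Qed.

Lemma Q_deriv t i : 0 < t -> (i < N)%nat -> is_derive (fun u => Q u i) t (Ft (Q t) i).
Proof.
  intros Ht Hi. apply is_derive_Reals. intros eps Heps.
  set (e := eps / 3).
  assert (He : 0 < e) by (unfold e; lra).
  destruct (Q_defect e He) as [eta [Heta Hd]].
  destruct (FtQ_cont t i ltac:(lra) Hi e He) as [d1 [Hd1 Hc]].
  assert (Hdp : 0 < Rmin eta (Rmin (t/2) d1)) by (apply Rmin_pos; [lra| apply Rmin_pos; lra]).
  exists (mkposreal _ Hdp). intros hh Hh0 Hhh. simpl in Hhh.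
  assert (Hm1 : Rmin eta (Rmin (t/2) d1) <= eta) by apply Rmin_l.
  assert (Hm2 : Rmin eta (Rmin (t/2) d1) <= Rmin (t/2) d1) by apply Rmin_r.
  assert (Hm3 : Rmin (t/2) d1 <= t/2) by apply Rmin_l.
  assert (Hm4 : Rmin (t/2) d1 <= d1) by apply Rmin_r.
  apply Rle_lt_trans with (2 * e); [|unfold e; lra].
  apply div_bound; auto.
  destruct (Rle_dec 0 hh) as [Hpos|Hneg].
  - assert (Hpos' : 0 < hh) by (destruct Hpos; auto; congruence).
    rewrite (Rabs_pos_eq hh) in Hhh |- * by lra.
    specialize (Hd t (t + hh) ltac:(lra) ltac:(lra) i Hi).
    specialize (Hc (t + hh) ltac:(lra) ltac:(rewrite Rabs_pos_eq by lra; lra)).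
    replace (t + hh - t) with hh in Hd by ring.
    replace (Q (t + hh) i - Q t i - hh * Ft (Q t) i) with
      ((Q (t + hh) i - Q t i - hh * Ft (Q (t + hh)) i) + hh * (Ft (Q (t + hh)) i - Ft (Q t) i)) by ring.
    eapply Rle_trans; [apply Rabs_triang|]. rewrite Rabs_mult, (Rabs_pos_eq hh) by lra.
    assert (hh * Rabs (Ft (Q (t + hh)) i - Ft (Q t) i) <= hh * e) by (apply Rmult_le_compat_l; lra).
    lra.
  - apply Rnot_le_lt in Hneg. rewrite (Rabs_left hh) in Hhh |- * by lra.
    specialize (Hd (t + hh) t ltac:(lra) ltac:(lra) i Hi).
    replace (t - (t + hh)) with (- hh) in Hd by ring.
    replace (Q (t + hh) i - Q t i - hh * Ft (Q t) i) with
      (- (Q t i - Q (t + hh) i - - hh * Ft (Q t) i)) by ring.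
    rewrite Rabs_Ropp. nra.
Qed.

Lemma vel_Q t i : 0 <= t -> (i < N)%nat ->
  vel N kappa alpha g nu (fun i t => Q t i) i t = Ft (Q t) i.
Proof. intros Ht Hi. rewrite Q_FtF by auto. reflexivity. Qed.

Lemma Q_is_solution : is_solution N kappa alpha g q0 nu (fun i t => Q t i).
Proof.
  intros i Hi. split; [|split; [|split]].
  - apply Q_0; auto.
  - apply eps_at_right. intros e He. pose proof Vb_pos.
    exists (e / (2 * Vb)). split; [apply Rdiv_lt_0_compat; lra|].
    intros s Hs. eapply Rle_lt_trans; [apply Q_lip; auto; lra|].
    rewrite Rminus_0_r. apply Rlt_le_trans with (Vb * (e / (2 * Vb))).
    + apply Rmult_lt_compat_l; lra.
    + replace (Vb * (e / (2 * Vb))) with (e / 2) by (field; lra). lra.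
  - intros t Ht. rewrite vel_Q by (auto; lra). apply Q_deriv; auto.
  - intros t Ht. apply eps_cont. intros e He.
    destruct (FtQ_cont t i ltac:(lra) Hi (e/2) ltac:(lra)) as [d [Hd Hc]].
    exists (Rmin d t). split; [apply Rmin_pos; lra|].
    intros u Hu. assert (Rmin d t <= d) by apply Rmin_l. assert (Rmin d t <= t) by apply Rmin_r.
    assert (0 < u) by (apply Rabs_lt_between in Hu; lra).
    rewrite !vel_Q by (auto; lra). eapply Rle_lt_trans; [apply Hc; lra|lra].
Qed.

End Clamp.
Definition sol (q : nat -> R -> R) := is_solution N kappa alpha g q0 nu q.

Lemma sol_rcont q i s0 : sol q -> (i < N)%nat -> 0 <= s0 ->
  forall e, 0 < e -> exists d, 0 < d /\ forall s, s0 <= s < s0 + d -> Rabs (q i s - q i s0) < e.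
Proof.
  intros Hs Hi Hs0. destruct (Hs i Hi) as [_ [Hr [Hd _]]].
  destruct (Rle_lt_or_eq_dec _ _ Hs0) as [Hlt|Heq].
  - intros e He. destruct (deriv_cont_eps _ _ _ (Hd s0 Hlt) e He) as [d [Hdp Hdd]].
    exists d. split; auto. intros s Hs'. apply Hdd. apply Rabs_lt_between; lra.
  - subst s0. apply at_right_eps. auto.
Qed.

Lemma vel_lt_eqpos q i j t : q i t = q j t -> nu i < nu j ->
  vel N kappa alpha g nu q i t < vel N kappa alpha g nu q j t.
Proof. intros H Hn. unfold vel. rewrite H. apply Gs. lra. Qed.

Lemma vel_eq_eqpos q i j t : q i t = q j t ->
  (vel N kappa alpha g nu q i t = vel N kappa alpha g nu q j t <-> nu i = nu j).
Proof.
  intros H. split.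
  - intros Hv. destruct (Rtotal_order (nu i) (nu j)) as [Hl|[He|Hl]]; auto.
    + pose proof (vel_lt_eqpos q i j t H Hl). lra.
    + pose proof (vel_lt_eqpos q j i t (eq_sym H) Hl). lra.
  - intros Hn. unfold vel. rewrite H, Hn. reflexivity.
Qed.

Lemma uniq_le q q' : sol q -> sol q' -> forall t, 0 <= t -> forall i, (i < N)%nat -> q' i t <= q i t.
Proof.
  intros Hq Hq' t Ht i Hi. apply Rle_plus_epsilon. intros z Hz.
  set (e := z / (1 + t)).
  assert (He : 0 < e) by (unfold e; apply Rdiv_lt_0_compat; lra).
  assert (Hez : e * (1 + t - 0) = z) by (unfold e; field; lra).
  cut (q' i t - q i t - e * (1 + t - 0) < 0). { lra. }
  apply (first_cross N (fun a u => q' a u - q a u - e * (1 + u - 0))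
     (fun a u => vel N kappa alpha g nu q' a u - vel N kappa alpha g nu q a u - e) 0); auto.
  - intros a Hav. destruct (Hq a Hav) as [H1 _]. destruct (Hq' a Hav) as [H2 _].
    rewrite H1, H2. lra.
  - intros a Hav e' He'.
    destruct (sol_rcont q a 0 Hq Hav ltac:(lra) (e'/3) ltac:(lra)) as [d1 [Hd1 H1]].
    destruct (sol_rcont q' a 0 Hq' Hav ltac:(lra) (e'/3) ltac:(lra)) as [d2 [Hd2 H2]].
    exists (Rmin (Rmin d1 d2) (e' / (3 * e))).
    assert (0 < e' / (3 * e)) by (apply Rdiv_lt_0_compat; lra).
    split; [apply Rmin_pos; [apply Rmin_pos|]; lra|].
    intros s Hs.
    assert (Rmin (Rmin d1 d2) (e' / (3 * e)) <= Rmin d1 d2) by apply Rmin_l.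
    assert (Rmin (Rmin d1 d2) (e' / (3 * e)) <= e' / (3 * e)) by apply Rmin_r.
    assert (Rmin d1 d2 <= d1) by apply Rmin_l. assert (Rmin d1 d2 <= d2) by apply Rmin_r.
    specialize (H1 s ltac:(lra)). specialize (H2 s ltac:(lra)).
    apply Rabs_lt_between in H1. apply Rabs_lt_between in H2.
    assert (Hes : e * s <= e * (e' / (3 * e))) by (apply Rmult_le_compat_l; lra).
    replace (e * (e' / (3 * e))) with (e' / 3) in Hes by (field; lra).
    assert (0 <= e * s) by (apply Rmult_le_pos; lra).
    cbv beta. apply Rabs_lt_between. lra.
  - intros a Hav u Hu. destruct (Hq a Hav) as [_ [_ [D1 _]]]. destruct (Hq' a Hav) as [_ [_ [D2 _]]].
    apply deriv_lin; auto.
  - intros u a Hu Hav H0 Hall.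
    assert (vel N kappa alpha g nu q' a u <= vel N kappa alpha g nu q a u).
    { rewrite !vel_F. apply F_cmp; [lra|]. intros k Hk'. specialize (Hall k Hk'). simpl in Hall. lra. }
    lra.
Qed.

Lemma uniq q q' : sol q -> sol q' -> forall i t, (i < N)%nat -> 0 <= t -> q' i t = q i t.
Proof.
  intros Hq Hq' i t Hi Ht. apply Rle_antisym; apply uniq_le; auto.
Qed.

Lemma stick_persist q i j s0 : sol q -> (i < N)%nat -> (j < N)%nat -> 0 <= s0 ->
  q i s0 = q j s0 -> nu i = nu j -> forall t, s0 <= t -> q i t = q j t.
Proof.
  intros Hq Hi Hj Hs0 Heq Hn t Ht.
  cut (forall z, 0 < z -> Rabs (q i t - q j t) <= z).
  { intros Hz. apply Rminus_diag_uniq. apply Rabs_eq_0. apply Rle_antisym; [|apply Rabs_pos].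
    apply Rle_plus_epsilon. intros z Hz'. rewrite Rplus_0_l. apply Hz; auto. }
  intros z Hz.
  set (e := z / (1 + t - s0)).
  assert (He : 0 < e) by (unfold e; apply Rdiv_lt_0_compat; lra).
  assert (Hez : e * (1 + t - s0) = z) by (unfold e; field; lra).
  set (h := fun a u => match a with
                       | O => q i u - q j u - e * (1 + u - s0)
                       | _ => q j u - q i u - e * (1 + u - s0) end).
  set (dh := fun a u => match a with
                       | O => vel N kappa alpha g nu q i u - vel N kappa alpha g nu q j u - e
                       | _ => vel N kappa alpha g nu q j u - vel N kappa alpha g nu q i u - e end).
  assert (A1 : forall a, (a < 2)%nat -> h a s0 < 0).
  { intros a Hav; destruct a as [|[|a]]; simpl; [rewrite Heq; lra| rewrite Heq; lra| lia]. }
  assert (A2 : forall a, (a < 2)%nat -> forall e', 0 < e' -> exists d, 0 < d /\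
      forall s, s0 <= s < s0 + d -> Rabs (h a s - h a s0) < e').
  { intros a Hav e' He'.
      destruct (sol_rcont q i s0 Hq Hi Hs0 (e'/3) ltac:(lra)) as [d1 [Hd1 H1]].
      destruct (sol_rcont q j s0 Hq Hj Hs0 (e'/3) ltac:(lra)) as [d2 [Hd2 H2]].
      exists (Rmin (Rmin d1 d2) (e' / (3 * e))).
      assert (0 < e' / (3 * e)) by (apply Rdiv_lt_0_compat; lra).
      split; [apply Rmin_pos; [apply Rmin_pos|]; lra|].
      intros s Hs.
      assert (Rmin (Rmin d1 d2) (e' / (3 * e)) <= Rmin d1 d2) by apply Rmin_l.
      assert (Rmin (Rmin d1 d2) (e' / (3 * e)) <= e' / (3 * e)) by apply Rmin_r.
      assert (Rmin d1 d2 <= d1) by apply Rmin_l. assert (Rmin d1 d2 <= d2) by apply Rmin_r.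
      specialize (H1 s ltac:(lra)); specialize (H2 s ltac:(lra)).
      apply Rabs_lt_between in H1; apply Rabs_lt_between in H2.
      assert (Hes : e * (s - s0) <= e * (e' / (3 * e))) by (apply Rmult_le_compat_l; lra).
      replace (e * (e' / (3 * e))) with (e' / 3) in Hes by (field; lra).
      assert (0 <= e * (s - s0)) by (apply Rmult_le_pos; lra).
      destruct a as [|[|a]]; simpl; apply Rabs_lt_between; [lra|lra|lia]. }
  assert (A3 : forall a, (a < 2)%nat -> forall u, s0 < u -> is_derive (h a) u (dh a u)).
  { intros a Hav u Hu. destruct (Hq i Hi) as [_ [_ [D1 _]]]. destruct (Hq j Hj) as [_ [_ [D2 _]]].
    destruct a as [|[|a]]; simpl; [apply deriv_lin; apply D1 || apply D2; lra
      | apply deriv_lin; apply D1 || apply D2; lra | lia]. }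
  assert (A4 : forall u a, s0 < u -> (a < 2)%nat -> h a u = 0 ->
      (forall b, (b < 2)%nat -> h b u <= 0) -> dh a u < 0).
  { intros u a Hu Hav Hh0 Hall. destruct a as [|[|a]]; simpl in Hh0 |- *; [| |lia].
    - assert (vel N kappa alpha g nu q i u <= vel N kappa alpha g nu q j u).
      { rewrite !vel_F. apply F_cmp; [lra|]. intros k Hk'.
        assert (0 < e * (1 + u - s0)) by (apply Rmult_lt_0_compat; lra). lra. }
      lra.
    - assert (vel N kappa alpha g nu q j u <= vel N kappa alpha g nu q i u).
      { rewrite !vel_F. apply F_cmp; [lra|]. intros k Hk'.
        assert (0 < e * (1 + u - s0)) by (apply Rmult_lt_0_compat; lra). lra. }
      lra. }
  assert (H0 : h 0%nat t < 0 /\ h 1%nat t < 0).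
  { split; apply (first_cross 2 h dh s0 A1 A2 A3 A4); auto. }
  simpl in H0. apply Rabs_le_between. lra.
Qed.

Lemma meet_once q i j t1 t2 : sol q -> (i < N)%nat -> (j < N)%nat -> nu j < nu i ->
  0 < t1 < t2 -> q i t1 = q j t1 -> q j t2 < q i t2.
Proof.
  intros Hq Hi Hj Hn Ht Heq.
  destruct (Hq i Hi) as [_ [_ [Di _]]]. destruct (Hq j Hj) as [_ [_ [Dj _]]].
  set (l := vel N kappa alpha g nu q i t1 - vel N kappa alpha g nu q j t1).
  assert (Hl : 0 < l) by (unfold l; pose proof (vel_lt_eqpos q j i t1 (eq_sym Heq) Hn); lra).
  assert (HD : is_derive (fun u => q i u - q j u) t1 l) by (apply deriv_sub; [apply Di|apply Dj]; lra).
  apply is_derive_Reals in HD.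
  destruct (HD (l/2) ltac:(lra)) as [[d Hd] Hdd]. simpl in Hdd.
  set (tau := Rmin (d/2) ((t2 - t1)/2)).
  assert (Htau : 0 < tau) by (apply Rmin_pos; lra).
  assert (Htau1 : tau <= d/2) by apply Rmin_l. assert (Htau2 : tau <= (t2 - t1)/2) by apply Rmin_r.
  specialize (Hdd tau ltac:(lra) ltac:(rewrite Rabs_pos_eq; lra)).
  rewrite Heq, Rminus_diag, Rminus_0_r in Hdd. apply Rabs_lt_between in Hdd.
  assert (Hpos : 0 < q i (t1 + tau) - q j (t1 + tau)).
  { assert (0 < (q i (t1 + tau) - q j (t1 + tau)) / tau) by lra.
    replace (q i (t1 + tau) - q j (t1 + tau)) with ((q i (t1 + tau) - q j (t1 + tau)) / tau * tau)
      by (field; lra). apply Rmult_lt_0_compat; lra. }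
  set (h := fun (a : nat) u => q j u - q i u).
  set (dh := fun (a : nat) u => vel N kappa alpha g nu q j u - vel N kappa alpha g nu q i u).
  assert (A1 : forall a, (a < 1)%nat -> h a (t1 + tau) < 0) by (intros; unfold h; lra).
  assert (A2 : forall a, (a < 1)%nat -> forall e', 0 < e' -> exists d, 0 < d /\
      forall s, t1 + tau <= s < t1 + tau + d -> Rabs (h a s - h a (t1 + tau)) < e').
  { intros a Hav e' He'.
    destruct (sol_rcont q i (t1 + tau) Hq Hi ltac:(lra) (e'/2) ltac:(lra)) as [d1 [Hd1 H1]].
    destruct (sol_rcont q j (t1 + tau) Hq Hj ltac:(lra) (e'/2) ltac:(lra)) as [d2 [Hd2 H2]].
    exists (Rmin d1 d2). split; [apply Rmin_pos; lra|]. intros s Hs.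
    assert (Rmin d1 d2 <= d1) by apply Rmin_l. assert (Rmin d1 d2 <= d2) by apply Rmin_r.
    specialize (H1 s ltac:(lra)); specialize (H2 s ltac:(lra)).
    apply Rabs_lt_between in H1; apply Rabs_lt_between in H2.
    unfold h. apply Rabs_lt_between. lra. }
  assert (A3 : forall a, (a < 1)%nat -> forall u, t1 + tau < u -> is_derive (h a) u (dh a u)).
  { intros a Hav u Hu. unfold h, dh. apply deriv_sub; [apply Dj|apply Di]; lra. }
  assert (A4 : forall u a, t1 + tau < u -> (a < 1)%nat -> h a u = 0 ->
      (forall b, (b < 1)%nat -> h b u <= 0) -> dh a u < 0).
  { intros u a Hu Hav Hh0 _. unfold h, dh in *.
    pose proof (vel_lt_eqpos q j i u ltac:(lra) Hn). lra. }
  pose proof (first_cross 1 h dh (t1 + tau) A1 A2 A3 A4 t2 ltac:(lra) 0%nat ltac:(lia)).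
  unfold h in H. lra.
Qed.

Lemma stick_iff q i j t : stick N kappa alpha g nu q i j t <-> q i t = q j t /\ nu i = nu j.
Proof.
  unfold stick. split.
  - intros [H1 H2]. split; auto. apply (vel_eq_eqpos q i j t H1). auto.
  - intros [H1 H2]. split; auto. apply (vel_eq_eqpos q i j t H1). auto.
Qed.

Lemma collide_iff q i j t : collide N kappa alpha g nu q i j t <-> q i t = q j t /\ nu i <> nu j.
Proof.
  unfold collide. split.
  - intros [H1 H2]. split; auto. intro Hn. apply H2. apply (vel_eq_eqpos q i j t H1). auto.
  - intros [H1 H2]. split; auto. intro Hv. apply H2. apply (vel_eq_eqpos q i j t H1). auto.
Qed.

Lemma collide_once q i j t1 t2 : sol q -> (i < N)%nat -> (j < N)%nat -> 0 < t1 -> 0 < t2 ->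
  collide N kappa alpha g nu q i j t1 -> collide N kappa alpha g nu q i j t2 -> t1 = t2.
Proof.
  intros Hq Hi Hj H1 H2 C1 C2.
  assert (Gen : forall t1 t2, 0 < t1 < t2 -> collide N kappa alpha g nu q i j t1 ->
    collide N kappa alpha g nu q i j t2 -> False).
  { intros u1 u2 Hu D1 D2. apply collide_iff in D1. apply collide_iff in D2.
    destruct D1 as [E1 N1]. destruct D2 as [E2 _].
    destruct (Rtotal_order (nu i) (nu j)) as [Hl|[He|Hl]]; [|contradiction|].
    - pose proof (meet_once q j i u1 u2 Hq Hj Hi Hl Hu (eq_sym E1)). lra.
    - pose proof (meet_once q i j u1 u2 Hq Hi Hj Hl Hu E1). lra. }
  destruct (Rtotal_order t1 t2) as [Hl|[He|Hl]]; auto.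
  - exfalso; apply (Gen t1 t2); auto.
  - exfalso; apply (Gen t2 t1); auto.
Qed.

Lemma collisions_finite q i : sol q -> (i < N)%nat ->
  finite_set (fun t => 0 < t /\ cardC N kappa alpha g nu q i t <> 0%nat).
Proof.
  intros Hq Hi.
  apply (finite_sub _ (fun t => exists j, (j < N)%nat /\ (0 < t /\ collide N kappa alpha g nu q i j t))).
  - intros t [Ht Hc]. destruct (cardP_nonzero _ _ Hc) as [j [Hj Hcj]]. exists j. auto.
  - apply finite_union. intros j Hj. apply finite_atmost1.
    intros t1 t2 [H1 C1] [H2 C2]. apply (collide_once q i j); auto.
Qed.

Lemma stick_persist' q i j s t : sol q -> (i < N)%nat -> (j < N)%nat -> 0 <= s <= t ->
  stick N kappa alpha g nu q i j s -> stick N kappa alpha g nu q i j t.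
Proof.
  intros Hq Hi Hj Hst Hs. apply stick_iff in Hs. apply stick_iff. destruct Hs as [E Hn].
  split; auto. apply (stick_persist q i j s); auto; lra.
Qed.

Section Lip.
Variable q : nat -> R -> R.
Hypothesis Hq : sol q.
Variable V : R.
Hypothesis HV : 0 < V.
Hypothesis Hlip : forall i s t, (i < N)%nat -> 0 <= s -> 0 <= t -> Rabs (q i t - q i s) <= V * Rabs (t - s).

Lemma stick_rc i j t : (i < N)%nat -> (j < N)%nat -> 0 <= t -> exists d, 0 < d /\
  forall s, t <= s < t + d -> (stick N kappa alpha g nu q i j s <-> stick N kappa alpha g nu q i j t).
Proof.
  intros Hi Hj Ht.
  destruct (classic (stick N kappa alpha g nu q i j t)) as [Hs|Hns].
  - exists 1. split; [lra|]. intros s Hs'. split; auto. intros _.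
    apply (stick_persist' q i j t s); auto; lra.
  - destruct (classic (nu i = nu j)) as [Hn|Hn].
    + assert (Hneq : q i t <> q j t) by (intro E; apply Hns, stick_iff; auto).
      set (d := Rabs (q i t - q j t) / (2 * V)).
      assert (Hd : 0 < d) by (unfold d; apply Rdiv_lt_0_compat; [apply Rabs_pos_lt; lra|lra]).
      exists d. split; auto. intros s Hs'. split; [|intro; contradiction].
      intros Hss. apply stick_iff in Hss. destruct Hss as [E _]. exfalso.
      pose proof (Hlip i t s Hi Ht ltac:(lra)). pose proof (Hlip j t s Hj Ht ltac:(lra)).
      rewrite (Rabs_pos_eq (s - t)) in H, H0 by lra.
      assert (V * (s - t) < Rabs (q i t - q j t) / 2).
      { apply Rlt_le_trans with (V * d). apply Rmult_lt_compat_l; lra.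
        unfold d. right. field. lra. }
      replace (q i t - q j t) with ((q i t - q i s) - (q j t - q j s)) in H1 by (rewrite E; ring).
      pose proof (Rabs_sub_le (q i t - q i s) (q j t - q j s)).
      rewrite (Rabs_minus_sym (q i t)), (Rabs_minus_sym (q j t)) in H2. lra.
    + exists 1. split; [lra|]. intros s Hs'. split; [|intro; contradiction].
      intros Hss. apply stick_iff in Hss. destruct Hss. contradiction.
Qed.

Lemma cardS_rc i t : (i < N)%nat -> 0 <= t -> exists d, 0 < d /\ forall s, t <= s < t + d ->
  cardS N kappa alpha g nu q i s = cardS N kappa alpha g nu q i t.
Proof.
  intros Hi Ht.
  assert (Hmono : forall j e e', 0 < e' <= e ->
    (forall s, t <= s < t + e -> (stick N kappa alpha g nu q i j s <-> stick N kappa alpha g nu q i j t)) ->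
    (forall s, t <= s < t + e' -> (stick N kappa alpha g nu q i j s <-> stick N kappa alpha g nu q i j t))).
  { intros j e e' He Hp s Hs. apply Hp. lra. }
  destruct (fin_eta N _ Hmono (fun j Hj => stick_rc i j t Hi Hj Ht)) as [d [Hd Hall]].
  exists d. split; auto. intros s Hs. unfold cardS. apply cardP_ext. intros j Hj. apply Hall; auto.
Qed.

Definition first_stick i j t := 0 < t /\ stick N kappa alpha g nu q i j t /\
  forall s, 0 < s < t -> ~ stick N kappa alpha g nu q i j s.

Lemma cardS_locconst i t : (i < N)%nat -> 0 < t -> (forall j, (j < N)%nat -> ~ first_stick i j t) ->
  exists d, 0 < d /\ forall s, Rabs (s - t) < d ->
  cardS N kappa alpha g nu q i s = cardS N kappa alpha g nu q i t.
Proof.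
  intros Hi Ht Hnf.
  assert (Hmono : forall j e e', 0 < e' <= e ->
    (forall s, Rabs (s - t) < e -> (stick N kappa alpha g nu q i j s <-> stick N kappa alpha g nu q i j t)) ->
    (forall s, Rabs (s - t) < e' -> (stick N kappa alpha g nu q i j s <-> stick N kappa alpha g nu q i j t))).
  { intros j e e' He Hp s Hs. apply Hp. lra. }
  assert (Hex : forall j, (j < N)%nat -> exists e, 0 < e /\
    forall s, Rabs (s - t) < e -> (stick N kappa alpha g nu q i j s <-> stick N kappa alpha g nu q i j t)).
  { intros j Hj. destruct (classic (stick N kappa alpha g nu q i j t)) as [Hs|Hns].
    - assert (Hs0 : exists s0, 0 < s0 < t /\ stick N kappa alpha g nu q i j s0).
      { apply NNPP. intro Hno. apply (Hnf j Hj). split; auto. split; auto.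
        intros s Hs' Hss. apply Hno. exists s. auto. }
      destruct Hs0 as [s0 [Hs0 Hss0]].
      exists (t - s0). split; [lra|]. intros s Hs'. apply Rabs_lt_between in Hs'.
      split; auto. intros _. apply (stick_persist' q i j s0 s); auto; lra.
    - destruct (stick_rc i j t Hi Hj (Rlt_le _ _ Ht)) as [d [Hd Hdd]].
      exists (Rmin d t). split; [apply Rmin_pos; lra|]. intros s Hs'.
      assert (Rmin d t <= d) by apply Rmin_l. assert (Rmin d t <= t) by apply Rmin_r.
      apply Rabs_lt_between in Hs'.
      destruct (Rle_dec t s).
      + apply Hdd. lra.
      + split; [|intro; contradiction]. intros Hss. apply Rnot_le_lt in n.
        apply (stick_persist' q i j s t); auto; lra. }
  destruct (fin_eta N _ Hmono Hex) as [d [Hd Hall]].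
  exists d. split; auto. intros s Hs. unfold cardS. apply cardP_ext. intros j Hj. apply Hall; auto.
Qed.

Lemma first_stick_finite i : (i < N)%nat -> finite_set (fun t => exists j, (j < N)%nat /\ first_stick i j t).
Proof.
  intros Hi. apply finite_union. intros j Hj. apply finite_atmost1.
  intros t1 t2 [H1 [S1 F1]] [H2 [S2 F2]].
  destruct (Rtotal_order t1 t2) as [Hl|[He|Hl]]; auto.
  - exfalso. apply (F2 t1); auto.
  - exfalso. apply (F1 t2); auto.
Qed.

Lemma discont_finite i : (i < N)%nat -> finite_set (fun t => 0 < t /\
  ~ continuous (fun s => INR (cardS N kappa alpha g nu q i s)) t).
Proof.
  intros Hi. eapply finite_sub; [|apply (first_stick_finite i Hi)].
  intros t [Ht Hnc]. apply NNPP. intro Hno. apply Hnc.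
  assert (Hnf : forall j, (j < N)%nat -> ~ first_stick i j t).
  { intros j Hj Hf. apply Hno. exists j. auto. }
  destruct (cardS_locconst i t Hi Ht Hnf) as [d [Hd Hdd]].
  apply eps_cont. intros e He. exists d. split; auto. intros s Hs.
  rewrite Hdd by auto. rewrite Rminus_diag, Rabs_R0. auto.
Qed.

End Lip.

Lemma exists_lip_sol : exists q, sol q /\ exists V, 0 < V /\
  forall i s t, (i < N)%nat -> 0 <= s -> 0 <= t -> Rabs (q i t - q i s) <= V * Rabs (t - s).
Proof.
  pose proof cc_pos as Hcc.
  destruct (Psi_unbounded alpha Ha (sumN N (fun k => Rabs (nu k)) / cc)) as [R0 [HR0 HK]].
  set (D0 := 2 * sumN N (fun k => Rabs (q0 k))).
  assert (HD0 : 0 <= D0) by (unfold D0; assert (0 <= sumN N (fun k => Rabs (q0 k)))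
     by (apply sumN_nonneg; intros; apply Rabs_pos); lra).
  set (Rc := R0 + D0).
  assert (HRc : 0 < Rc) by (unfold Rc; lra).
  assert (HRnu : forall i j, (i < N)%nat -> (j < N)%nat -> nu i - nu j <= 2 * cc * Psi alpha Rc).
  { intros i j Hi Hj.
    pose proof (abs_le_sumN N nu i Hi). pose proof (abs_le_sumN N nu j Hj).
    pose proof (RRle_abs (nu i)). pose proof (Rabs_pos (nu j)). pose proof (RRle_abs (- nu j)).
    rewrite Rabs_Ropp in H3.
    assert (Psi alpha R0 <= Psi alpha Rc) by (apply Pm; unfold Rc; lra).
    assert (sumN N (fun k => Rabs (nu k)) <= cc * Psi alpha R0).
    { apply Rmult_le_reg_r with (/ cc); [apply Rinv_0_lt_compat; lra|].
      replace (cc * Psi alpha R0 * / cc) with (Psi alpha R0) by (field; lra). exact HK. }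
    assert (cc * Psi alpha R0 <= cc * Psi alpha Rc) by (apply Rmult_le_compat_l; lra).
    lra. }
  assert (HRq : forall i j, (i < N)%nat -> (j < N)%nat -> q0 i - q0 j <= Rc).
  { intros i j Hi Hj.
    pose proof (abs_le_sumN N q0 i Hi). pose proof (abs_le_sumN N q0 j Hj).
    pose proof (RRle_abs (q0 i)). pose proof (RRle_abs (- q0 j)). rewrite Rabs_Ropp in H2.
    unfold Rc, D0. lra. }
  exists (fun i t => Q Rc t i). split.
  - apply Q_is_solution; auto.
  - exists (Vb Rc). split; [apply Vb_pos; auto|].
    intros i s t Hi Hs Ht. apply Q_lip'; auto.
Qed.

Lemma main_sys : exists q : nat -> R -> R,
    is_solution N kappa alpha g q0 nu q /\
    (forall q', is_solution N kappa alpha g q0 nu q' ->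
       forall i t, (i < N)%nat -> 0 <= t -> q' i t = q i t) /\
    (forall i, (i < N)%nat ->
       finite_set (fun t => 0 < t /\ cardC N kappa alpha g nu q i t <> 0%nat)) /\
    (forall i, (i < N)%nat ->
       (forall s t, 0 <= s <= t -> forall j, (j < N)%nat ->
          stick N kappa alpha g nu q i j s -> stick N kappa alpha g nu q i j t) /\
       (forall s t, 0 <= s <= t ->
          (cardS N kappa alpha g nu q i s <= cardS N kappa alpha g nu q i t)%nat) /\
       (forall t, 0 <= t -> exists d, 0 < d /\ forall s, t <= s < t + d ->
          cardS N kappa alpha g nu q i s = cardS N kappa alpha g nu q i t) /\
       finite_set (fun t => 0 < t /\
          ~ continuous (fun s => INR (cardS N kappa alpha g nu q i s)) t)) /\
    finite_set (in_T N kappa alpha g nu q).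
Proof.
  destruct exists_lip_sol as [q [Hq [V [HV Hlip]]]].
  exists q. split; [exact Hq|]. split; [|split; [|split]].
  - intros q' Hq' i t Hi Ht. apply (uniq q q'); auto.
  - intros i Hi. apply collisions_finite; auto.
  - intros i Hi. split; [|split; [|split]].
    + intros s t Hst j Hj Hs. apply (stick_persist' q i j s t); auto.
    + intros s t Hst. unfold cardS. apply cardP_mono. intros j Hj Hs.
      apply (stick_persist' q i j s t); auto.
    + intros t Ht. apply (cardS_rc q Hq V HV Hlip); auto.
    + apply (discont_finite q Hq V HV Hlip); auto.
  - unfold in_T.
    apply (finite_sub _ (fun t => exists i, (i < N)%nat /\
      ((0 < t /\ cardC N kappa alpha g nu q i t <> 0%nat) \/
       (0 < t /\ ~ continuous (fun s => INR (cardS N kappa alpha g nu q i s)) t)))).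
    + intros t [Ht [i [Hi [H|H]]]]; exists i; split; auto.
    + apply finite_union. intros i Hi. apply finite_or.
      * apply collisions_finite; auto.
      * apply (discont_finite q Hq V HV Hlip); auto.
Qed.

End Sys.


Theorem proposition3p3 (N : nat) (kappa alpha : R) (g : R -> R)
  (q0 nu : nat -> R) :
  (1 <= N)%nat -> 0 < kappa -> 0 < alpha < 1 -> admissible_g g ->
  exists q : nat -> R -> R,
    (* (1) existence and uniqueness of the global classical solution *)
    is_solution N kappa alpha g q0 nu q /\
    (forall q', is_solution N kappa alpha g q0 nu q' ->
       forall i t, (i < N)%nat -> 0 <= t -> q' i t = q i t) /\
    (* (2) finitely many collision times for each i *)
    (forall i, (i < N)%nat ->
       finite_set (fun t => 0 < t /\ cardC N kappa alpha g nu q i t <> 0%nat)) /\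
    (* (3) monotonicity of S_i, and |S_i| right-continuous nondecreasing step function *)
    (forall i, (i < N)%nat ->
       (forall s t, 0 <= s <= t -> forall j, (j < N)%nat ->
          stick N kappa alpha g nu q i j s -> stick N kappa alpha g nu q i j t) /\
       (forall s t, 0 <= s <= t ->
          (cardS N kappa alpha g nu q i s <= cardS N kappa alpha g nu q i t)%nat) /\
       (forall t, 0 <= t -> exists d, 0 < d /\ forall s, t <= s < t + d ->
          cardS N kappa alpha g nu q i s = cardS N kappa alpha g nu q i t) /\
       finite_set (fun t => 0 < t /\
          ~ continuous (fun s => INR (cardS N kappa alpha g nu q i s)) t)) /\
    (* (4) the exceptional set T is finite *)
    finite_set (in_T N kappa alpha g nu q).
Proof.
  intros HN Hk Ha [dg [Hc1 [Hg0 [Hdg _]]]].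
  eapply main_sys; eauto.
Qed.
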